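(* For all homogeneous $\varphi_1,\varphi_2,\psi\in CC^\bullet(\mathscr A)[1]$, as operators on $CC_\bullet(\mathscr A)[1]$: $\rho_{[\varphi_1,\varphi_2],\psi}-\rho_{\varphi_1,[\varphi_2,\psi]}+(-1)^{|\varphi_1|'|\varphi_2|'}\rho_{\varphi_2,[\varphi_1,\psi]}=[\mathcal L_{\varphi_1},\rho_{\varphi_2,\psi}]-(-1)^{|\varphi_1|'|\varphi_2|'}[\mathcal L_{\varphi_2},\rho_{\varphi_1,\psi}]$, where on the right $[\cdot,\cdot]$ is the graded commutator ($\mathcal L_\varphi$ has degree $|\varphi|'$, $\rho_{\varphi,\psi}$ has degree $|\varphi|'+|\psi|'$).
   Context: $R$ a graded-commutative ring containing $\mathbb Q$. $\mathscr A$: a set of objects with graded $R$-modules $\mathrm{Hom}_{\mathscr A}(X,Y)$. Set $\mathscr A(X_0,\dots,X_k):=\mathrm{Hom}(X_0,X_1)[1]\otimes\cdots\otimes\mathrm{Hom}(X_{k-1},X_k)[1]$; for $x$ in a shifted Hom, $|x|'$ denotes its shifted degree. $CC^\bullet(\mathscr A)=\prod_{X_0,\dots,X_k}\mathrm{Hom}_R(\mathscr A(X_0,\dots,X_k),\mathrm{Hom}(X_0,X_k))$ (graded), $CC_\bullet(\mathscr A)=\bigoplus\mathrm{Hom}(X_0,X_1)\otimes\mathscr A(X_1,\dots,X_k,X_0)$; elements of $CC_\bullet(\mathscr A)[1]$ are written $\mathbb X=x_0\otimes\cdots\otimes x_k$ with all $x_i$ in shifted Homs. For $\varphi\in CC^\bullet(\mathscr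 A)[1]$, $|\varphi|'$ denotes its degree in $CC^\bullet(\mathscr A)[1]$ (i.e. as a map of shifted spaces $\mathscr A(\cdots)\to\mathrm{Hom}[1]$). Operations: $(\varphi\circ\psi)(x_1,\dots,x_k)=\sum_{0\le i\le j\le k}(-1)^{|\psi|'(|x_1|'+\cdots+|x_i|')}\varphi(x_1,\dots,x_i,\psi(x_{i+1},\dots,x_j),x_{j+1},\dots,x_k)$; $[\varphi,\psi]=\varphi\circ\psi-(-1)^{|\varphi|'|\psi|'}\psi\circ\varphi$; $\mathcal L_\varphi(\mathbb X)=\sum_{0\le i\le j\le k}(-1)^{|\varphi|'(|x_0|'+\cdots+|x_i|')}x_0\otimes\cdots\otimes x_i\otimes\varphi(x_{i+1},\dots,x_j)\otimes x_{j+1}\otimes\cdots\otimes x_k+\sum_{0\le i\le j\le k}(-1)^{(|x_0|'+\cdots+|x_j|')(|x_{j+1}|'+\cdots+|x_k|')}\varphi(x_{j+1},\dots,x_k,x_0,\dots,x_i)\otimes x_{i+1}\otimes\cdots\otimes x_j$; $\rho_{\varphi,\psi}(\mathbb X)=\sum_{0\le i\le j\le s\le t\le k}(-1)^{\#}\varphi(x_{j+1},\dots,x_s,\psi(x_{s+1},\dots,x_t),x_{t+1},\dots,x_k,x_0,\dots,x_i)\otimes x_{i+1}\otimes\cdots\otimes x_j$, $\#=|\psi|'(|x_{j+1}|'+\cdots+|x_s|')+(|x_0|'+\cdots+|x_j|')(|x_{j+1}|'+\cdots+|x_k|')$. *)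

(* Defs.v *)
From HB Require Import structures.
From mathcomp Require Import all_boot all_order all_algebra.
Set Implicit Arguments. Unset Strict Implicit. Unset Printing Implicit Defensive.
Import GRing.Theory.
Local Open Scope ring_scope.

Section Hochschild.
Variables (Ob : Type) (M : zmodType).

(* A homogeneous element x of Hom(X,Y)[1]: source X, target Y,
   shifted degree |x|', value in the ambient module M (which contains all Homs). *)
Record hel := HEl { hsrc : Ob; htgt : Ob; hdeg : int; hval : M }.

(* A homogeneous Hochschild cochain phi in CC^*(A)[1]: its degree |phi|' and,
   for each starting object X0 and each composable string x_1..x_k of homogeneous
   elements starting at X0, the value phi(x_1,...,x_k) in Hom(X0,X_k). *)
Record coch := Coch { cdeg : int; cfun : Ob -> seq hel -> M }.

Definition spow (n : int) : int := if odd (absz n) then -1 else 1.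
Definition sumd (w : seq hel) : int := \sum_(x <- w) hdeg x.
Definition endo (X0 : Ob) (w : seq hel) : Ob := last X0 (map htgt w).
Definition app (f : coch) (X0 : Ob) (w : seq hel) : hel :=
  HEl X0 (endo X0 w) (cdeg f + sumd w) (cfun f X0 w).
(* half-open segment [a,b) of a word (0-based) *)
Definition seg (w : seq hel) (a b : nat) := drop a (take b w).

Definition pairs (n : nat) : seq (nat * nat) :=
  [seq (i, j) | i <- iota 0 n.+1, j <- iota i (n.+1 - i)].
Definition quads (n : nat) : seq (nat * nat * nat * nat) :=
  flatten [seq flatten [seq [seq (i, j, s, t) | s <- iota j (n.+1 - j),
                                                 t <- iota s (n.+1 - s)]
                        | j <- iota i (n.+1 - i)] | i <- iota 0 n.+1].

(* Gerstenhaber composition (phi o psi)(x_1..x_k); here 0-based: x_1..x_i = take i w *)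
Definition ccomp (f g : coch) (X0 : Ob) (w : seq hel) : M :=
  \sum_(ij <- pairs (size w))
     cfun f X0 (take ij.1 w ++ app g (endo X0 (take ij.1 w)) (seg w ij.1 ij.2)
                  :: drop ij.2 w) *~ spow (cdeg g * sumd (take ij.1 w)).

Definition cbr (f g : coch) : coch :=
  Coch (cdeg f + cdeg g)
       (fun X0 w => ccomp f g X0 w - ccomp g f X0 w *~ spow (cdeg f * cdeg g)).

(* formal integer combinations of elementary tensors x_0 (x) ... (x) x_k *)
Definition chain := seq (int * seq hel).
Definition ext (F : seq hel -> chain) (c : chain) : chain :=
  flatten [seq [seq (p.1 * q.1, q.2) | q <- F p.2] | p <- c].
Definition scalec (a : int) (c : chain) : chain := [seq (a * p.1, p.2) | p <- c].

(* L_phi on x_0 (x) ... (x) x_k (0-based word of size k+1) *)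
Definition Lop (f : coch) (w : seq hel) : chain :=
  if w is x :: _ then
    let bo := hsrc x in
    [seq (spow (cdeg f * sumd (take ij.1.+1 w)),
          take ij.1.+1 w ++ app f (endo bo (take ij.1.+1 w)) (seg w ij.1.+1 ij.2.+1)
            :: drop ij.2.+1 w) | ij <- pairs (size w).-1]
    ++
    [seq (spow (sumd (take ij.2.+1 w) * sumd (drop ij.2.+1 w)),
          app f (endo bo (take ij.2.+1 w)) (drop ij.2.+1 w ++ take ij.1.+1 w)
            :: seg w ij.1.+1 ij.2.+1) | ij <- pairs (size w).-1]
  else [::].

Definition rho (f g : coch) (w : seq hel) : chain :=
  if w is x :: _ then
    let bo := hsrc x in
    [seq let: (i, j, s, t) := q in
         let y := app g (endo bo (take s.+1 w)) (seg w s.+1 t.+1) in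
         (spow (cdeg g * sumd (seg w j.+1 s.+1)
                + sumd (take j.+1 w) * sumd (drop j.+1 w)),
          app f (endo bo (take j.+1 w))
              (seg w j.+1 s.+1 ++ y :: drop t.+1 w ++ take i.+1 w)
            :: seg w i.+1 j.+1)
    | q <- quads (size w).-1]
  else [::].

Definition gcomm (A : seq hel -> chain) (dA : int) (B : seq hel -> chain) (dB : int)
  (w : seq hel) : chain :=
  ext A (B w) ++ scalec (- spow (dA * dB)) (ext B (A w)).

Definition lhs62 (f1 f2 g : coch) (w : seq hel) : chain :=
  rho (cbr f1 f2) g w
  ++ scalec (-1) (rho f1 (cbr f2 g) w)
  ++ scalec (spow (cdeg f1 * cdeg f2)) (rho f2 (cbr f1 g) w).

Definition rhs62 (f1 f2 g : coch) (w : seq hel) : chain :=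
  gcomm (Lop f1) (cdeg f1) (rho f2 g) (cdeg f2 + cdeg g) w
  ++ scalec (- spow (cdeg f1 * cdeg f2))
       (gcomm (Lop f2) (cdeg f2) (rho f1 g) (cdeg f1 + cdeg g) w).

Definition evalc (V : zmodType) (tens : seq M -> V) (c : chain) : V :=
  \sum_(p <- c) tens (map hval p.2) *~ p.1.

Fixpoint composable (X0 : Ob) (w : seq hel) : Prop :=
  match w with [::] => True | x :: w' => hsrc x = X0 /\ composable (htgt x) w' end.

Definition homog (hom : Ob -> Ob -> int -> pred M) (w : seq hel) : bool :=
  all (fun x => hval x \in hom (hsrc x) (htgt x) (hdeg x)) w.

Definition coch_ok (hom : Ob -> Ob -> int -> pred M) (f : coch) : Prop :=
  (forall X0 w1 w2 X Y d (a b : M),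
     cfun f X0 (w1 ++ HEl X Y d (a + b) :: w2)
     = cfun f X0 (w1 ++ HEl X Y d a :: w2) + cfun f X0 (w1 ++ HEl X Y d b :: w2))
  /\ (forall X0 w, composable X0 w -> homog hom w ->
        cfun f X0 w \in hom X0 (endo X0 w) (cdeg f + sumd w)).

(* x_0 (x) ... (x) x_k with x_i in Hom(X_i, X_{i+1 mod k+1})[1] homogeneous *)
Definition cyc_word (hom : Ob -> Ob -> int -> pred M) (w : seq hel) : Prop :=
  exists x w', w = x :: w' /\ composable (hsrc x) w
               /\ endo (hsrc x) w = hsrc x /\ homog hom w.

End Hochschild.

(* Main.v *)
Require Import Defs.
From HB Require Import structures.
From mathcomp Require Import all_boot all_order all_algebra zify ring.
Set Implicit Arguments. Unset Strict Implicit. Unset Printing Implicit Defensive.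
Import GRing.Theory.
Local Open Scope ring_scope.

Section S.
Variables (Ob : Type) (M : zmodType).
Local Notation hel := (hel Ob M).

Lemma iota0S n : iota 0 n.+1 = 0%N :: map S (iota 0 n).
Proof. by rewrite /=; congr (_ :: _); rewrite (iotaDl 1 0). Qed.

Definition S2 (U : zmodType) (w : seq hel) (F : seq hel -> seq hel -> U) : U :=
  \sum_(i <- iota 0 (size w).+1) F (take i w) (drop i w).

Lemma eq_S2 (U : zmodType) w (F G : seq hel -> seq hel -> U) :
  (forall a b, F a b = G a b) -> S2 w F = S2 w G.
Proof. by move=> FG; apply: eq_bigr => i _; apply: FG. Qed.

Lemma S2_nil (U : zmodType) (F : seq hel -> seq hel -> U) : S2 [::] F = F [::] [::].
Proof. by rewrite /S2 /= big_cons big_nil addr0. Qed.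

Lemma S2_cons (U : zmodType) y v (F : seq hel -> seq hel -> U) :
  S2 (y :: v) F = F [::] (y :: v) + S2 v (fun p q => F (y :: p) q).
Proof.
by rewrite /S2 [size _]/= iota0S big_cons big_map.
Qed.

Lemma S2_cat_cons (U : zmodType) u y v (F : seq hel -> seq hel -> U) :
  S2 (u ++ y :: v) F = S2 u (fun p q => F p (q ++ y :: v))
                       + S2 v (fun p q => F (u ++ y :: p) q).
Proof.
elim: u F => [|z u IH] F /=.
  by rewrite S2_cons S2_nil.
rewrite !S2_cons IH addrA; congr (_ + _).
Qed.

Lemma S2D (U : zmodType) w (F G : seq hel -> seq hel -> U) :
  S2 w (fun a b => F a b + G a b) = S2 w F + S2 w G.
Proof. by rewrite /S2 big_split. Qed.

Lemma S2N (U : zmodType) w (F : seq hel -> seq hel -> U) :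
  S2 w (fun a b => - F a b) = - S2 w F.
Proof. by rewrite /S2 sumrN. Qed.


Lemma S2Mz (U : zmodType) w (F : seq hel -> seq hel -> U) z :
  S2 w (fun a b => F a b *~ z) = S2 w F *~ z.
Proof.
rewrite /S2; elim: (iota _ _) => [|i s IH]; first by rewrite !big_nil mul0rz.
by rewrite !big_cons IH mulrzDl_tmp.
Qed.

Lemma S2_exch (U : zmodType) u v (F : seq hel -> seq hel -> seq hel -> seq hel -> U) :
  S2 u (fun a b => S2 v (fun c d => F a b c d)) = S2 v (fun c d => S2 u (fun a b => F a b c d)).
Proof. by rewrite /S2 exchange_big. Qed.

Lemma S2_assoc (U : zmodType) w (F : seq hel -> seq hel -> seq hel -> U) :
  S2 w (fun u v => S2 u (fun a b => F a b v)) = S2 w (fun a r => S2 r (fun b v => F a b v)).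
Proof.
elim: w F => [|y w IH] F; first by rewrite !S2_nil.
rewrite !S2_cons S2_nil -addrA; congr (_ + _).
under eq_S2 => p q do rewrite S2_cons.
by rewrite S2D IH.
Qed.

Lemma S2_add_fun (U U' : zmodType) (h : U -> U') :
  (forall a b, h (a + b) = h a + h b) ->
  forall w F, h (S2 w F) = S2 w (fun a b => h (F a b)).
Proof.
move=> hD.
have h0 : h 0 = 0.
  have := hD 0 0; rewrite addr0 => /(congr1 (fun t => t - h 0)).
  by rewrite subrr addrK => /esym.
move=> w F; rewrite /S2; elim: (iota _ _) => [|i s IH]; first by rewrite !big_nil.
by rewrite !big_cons hD IH.
Qed.

End S.

Section B.
Variables (Ob : Type) (M : zmodType).
Local Notation hel := (hel Ob M).
Local Notation seg := (@seg Ob M).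

Lemma take_seg (w : seq hel) i j : (i <= j)%N -> take j w = take i w ++ seg w i j.
Proof. by move=> ij; rewrite /Defs.seg -{1}(cat_take_drop i (take j w)) take_takel. Qed.

Lemma drop_seg (w : seq hel) j s : (j <= s)%N -> drop j w = seg w j s ++ drop s w.
Proof.
move=> js; rewrite -{1}(cat_take_drop (s - j) (drop j w)) take_drop drop_drop subnK //.
Qed.

Lemma sum_rng (U : zmodType) (w : seq hel) i (G : nat -> U) (G' : seq hel -> seq hel -> U) :
  (i <= size w)%N ->
  (forall j, (i <= j <= size w)%N -> G j = G' (seg w i j) (drop j w)) ->
  \sum_(j <- iota i ((size w).+1 - i)) G j = S2 (drop i w) G'.
Proof.
move=> iw HG; rewrite /S2 size_drop -[i]addn0 iotaDl big_map addn0 subSn //.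
apply: eq_big_seq => k; rewrite mem_iota add0n ltnS => /andP[_ kw].
rewrite HG; last by apply/andP; split; [rewrite leq_addr|lia].
by rewrite /Defs.seg take_drop drop_drop addnC.
Qed.

Lemma sum_rng0 (U : zmodType) (w : seq hel) (G : nat -> U) (G' : seq hel -> seq hel -> U) :
  (forall j, (j <= size w)%N -> G j = G' (take j w) (drop j w)) ->
  \sum_(j <- iota 0 (size w).+1) G j = S2 w G'.
Proof.
move=> HG; have := @sum_rng U w 0 G G' (leq0n _).
rewrite subn0 drop0; apply => j /andP[_ jw].
by rewrite /Defs.seg drop0 HG.
Qed.

Lemma pairs_S (U : zmodType) (w : seq hel) (H : nat * nat -> U) (H' : seq hel -> seq hel -> seq hel -> U) :
  (forall i j, (i <= j <= size w)%N -> H (i, j) = H' (take i w) (seg w i j) (drop j w)) ->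
  \sum_(ij <- pairs (size w)) H ij = S2 w (fun a r => S2 r (fun b c => H' a b c)).
Proof.
move=> HH; rewrite /pairs big_allpairs_dep.
apply: sum_rng0 => i iw.
apply: sum_rng => // j ij.
by apply: HH.
Qed.

Lemma quads_S (U : zmodType) (w : seq hel) (H : nat * nat * nat * nat -> U)
  (H' : seq hel -> seq hel -> seq hel -> seq hel -> seq hel -> U) :
  (forall i j s t, (i <= j)%N -> (j <= s)%N -> (s <= t <= size w)%N ->
     H (i, j, s, t) = H' (take i w) (seg w i j) (seg w j s) (seg w s t) (drop t w)) ->
  \sum_(q <- quads (size w)) H q =
  S2 w (fun a r1 => S2 r1 (fun b r2 => S2 r2 (fun c r3 => S2 r3 (fun d e => H' a b c d e)))).
Proof.
move=> HH; rewrite /quads big_flatten big_map.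
apply: sum_rng0 => i iw.
rewrite big_flatten big_map; apply: sum_rng => // j /andP[ij jw].
rewrite big_allpairs_dep; apply: sum_rng => // s /andP[js sw].
apply: sum_rng => // t st.
by apply: HH.
Qed.

End B.

Section C.
Variables (Ob : Type) (M : zmodType).
Local Notation hel := (hel Ob M).
Local Notation coch := (coch Ob M).
Local Notation chain := (chain Ob M).

Definition sumc (U : zmodType) (c : chain) (K : int -> seq hel -> U) : U :=
  \sum_(p <- c) K p.1 p.2.

Lemma sumc_cat (U : zmodType) c1 c2 (K : int -> seq hel -> U) :
  sumc (c1 ++ c2) K = sumc c1 K + sumc c2 K.
Proof. by rewrite /sumc big_cat. Qed.

Lemma sumc_scale (U : zmodType) a c (K : int -> seq hel -> U) :
  sumc (scalec a c) K = sumc c (fun s ws => K (a * s) ws).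
Proof. by rewrite /sumc /scalec big_map. Qed.

Lemma sumc_ext (U : zmodType) F c (K : int -> seq hel -> U) :
  sumc (ext F c) K = sumc c (fun s ws => sumc (F ws) (fun s' ws' => K (s * s') ws')).
Proof.
rewrite /sumc /ext big_flatten big_map; apply: eq_bigr => p _.
by rewrite big_map.
Qed.

Lemma Lop_S (U : zmodType) (f : coch) x w (K : int -> seq hel -> U) :
  sumc (Lop f (x :: w)) K =
  S2 w (fun a r => S2 r (fun b c =>
     K (spow (cdeg f * sumd (x :: a))) (x :: a ++ app f (endo (hsrc x) (x :: a)) b :: c)))
  + S2 w (fun a r => S2 r (fun b c =>
     K (spow (sumd (x :: a ++ b) * sumd c))
       (app f (endo (hsrc x) (x :: a ++ b)) (c ++ x :: a) :: b))).
Proof.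
rewrite /Lop /sumc big_cat !big_map /=; congr (_ + _).
  by apply: (pairs_S (H := fun ij => K (spow (cdeg f * sumd (x :: take ij.1 w)))
          (x :: take ij.1 w ++ app f (endo (hsrc x) (x :: take ij.1 w)) (seg w ij.1 ij.2) :: drop ij.2 w))).
apply: (pairs_S (H := fun ij => K (spow (sumd (x :: take ij.2 w) * sumd (drop ij.2 w)))
          (app f (endo (hsrc x) (x :: take ij.2 w)) (drop ij.2 w ++ x :: take ij.1 w) :: seg w ij.1 ij.2))).
by move=> i j /andP[ij _] /=; rewrite (take_seg w ij).
Qed.

Lemma rho_S (U : zmodType) (f g : coch) x w (K : int -> seq hel -> U) :
  sumc (rho f g (x :: w)) K =
  S2 w (fun a r1 => S2 r1 (fun b r2 => S2 r2 (fun c r3 => S2 r3 (fun d e =>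
     K (spow (cdeg g * sumd c + sumd (x :: a ++ b) * sumd (c ++ d ++ e)))
       (app f (endo (hsrc x) (x :: a ++ b))
            (c ++ app g (endo (hsrc x) (x :: a ++ b ++ c)) d :: e ++ x :: a) :: b))))).
Proof.
rewrite /rho /sumc big_map /=.
pose H := fun q : nat * nat * nat * nat => let: (i, j, s, t) := q in
   K (spow (cdeg g * sumd (seg w j s) + sumd (x :: take j w) * sumd (drop j w)))
     (app f (endo (hsrc x) (x :: take j w))
       (seg w j s ++ app g (endo (hsrc x) (x :: take s w)) (seg w s t) :: drop t w ++ x :: take i w)
       :: seg w i j).
rewrite (eq_bigr H); last by case=> [[[i j] s] t].
apply: quads_S.
move=> i j s t ij js /andP[st _] /=.
rewrite (take_seg w js) (take_seg w ij) (drop_seg w js) (drop_seg w st) -!catA.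
by [].
Qed.

Lemma ccomp_S (f g : coch) X0 w :
  ccomp f g X0 w = S2 w (fun a r => S2 r (fun b c =>
     cfun f X0 (a ++ app g (endo X0 a) b :: c) *~ spow (cdeg g * sumd a))).
Proof.
rewrite /ccomp.
by apply: (pairs_S (H := fun ij => cfun f X0 (take ij.1 w ++ app g (endo X0 (take ij.1 w)) (seg w ij.1 ij.2)
                  :: drop ij.2 w) *~ spow (cdeg g * sumd (take ij.1 w)))).
Qed.

End C.

Section D.
Variables (Ob : Type) (M : zmodType) (U : zmodType).
Local Notation hel := (hel Ob M).
Local Notation sh := (seq hel).

Lemma eq_S2w w (F G : sh -> sh -> U) :
  (forall a b, a ++ b = w -> F a b = G a b) -> S2 w F = S2 w G.
Proof. by move=> FG; apply: eq_bigr => i _; apply: FG; rewrite cat_take_drop. Qed.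

Lemma S2_assocD w (F : sh -> sh -> sh -> sh -> U) :
  S2 w (fun u v => S2 u (fun a b => F u a b v)) = S2 w (fun a r => S2 r (fun b v => F (a ++ b) a b v)).
Proof.
rewrite -(S2_assoc w (fun a b v => F (a ++ b) a b v)).
apply: eq_S2 => u v; apply: eq_S2w => a b <-; by [].
Qed.

End D.

Lemma add_0 (U U' : zmodType) (h : U -> U') :
  (forall a b, h (a + b) = h a + h b) -> h 0 = 0.
Proof.
move=> hD; have := hD 0 0; rewrite addr0 => /(congr1 (fun t => t - h 0)).
by rewrite subrr addrK => /esym.
Qed.

Lemma add_N (U U' : zmodType) (h : U -> U') :
  (forall a b, h (a + b) = h a + h b) -> forall a, h (- a) = - h a.
Proof.
move=> hD a; apply/eqP; rewrite -subr_eq0 opprK -hD addNr.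
by rewrite (add_0 hD).
Qed.

Lemma add_Mz (U U' : zmodType) (h : U -> U') :
  (forall a b, h (a + b) = h a + h b) -> forall a z, h (a *~ z) = h a *~ z.
Proof.
move=> hD a; have hn : forall n, h (a *+ n) = h a *+ n.
  by elim=> [|n IH]; rewrite ?mulr0n ?(add_0 hD) // !mulrS hD IH.
case=> n; first by rewrite -!pmulrn hn.
by rewrite NegzE !mulrNz (add_N hD) -!pmulrn hn.
Qed.

Lemma add_B (U U' : zmodType) (h : U -> U') :
  (forall a b, h (a + b) = h a + h b) -> forall a b, h (a - b) = h a - h b.
Proof. by move=> hD a b; rewrite hD (add_N hD). Qed.

Lemma oddk (k:nat) : odd k = (k %% 2 == 1)%N.
Proof. by rewrite modn2; case: (odd k). Qed.
Lemma oddzD (m n : int) : odd (absz (m + n)) = odd (absz m) (+) odd (absz n).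
Proof. rewrite !oddk. case: eqP; case: eqP; case: eqP => /= ; lia. Qed.
Lemma oddzM (m n : int) : odd (absz (m * n)) = odd (absz m) && odd (absz n).
Proof. by rewrite abszM oddM. Qed.
Lemma oddzN (m : int) : odd (absz (- m)) = odd (absz m).
Proof. by rewrite abszN. Qed.

Lemma spowD m n : spow (m + n) = spow m * spow n.
Proof. by rewrite /spow oddzD; case: (odd _); case: (odd _). Qed.
Lemma spow_par m n : odd (absz m) = odd (absz n) -> spow m = spow n.
Proof. by rewrite /spow => ->. Qed.
Lemma spow1 : spow 1 = -1. Proof. by []. Qed.
Lemma spow0 : spow 0 = 1. Proof. by []. Qed.
Lemma NspowE m : - spow m = spow (1 + m).
Proof. by rewrite spowD spow1 mulN1r. Qed.

Section E.
Variables (Ob : Type) (M : zmodType).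
Local Notation hel := (hel Ob M).
Local Notation coch := (coch Ob M).

Lemma sumd_cat (a b : seq hel) : sumd (a ++ b) = sumd a + sumd b.
Proof. by rewrite /sumd big_cat. Qed.
Lemma sumd_cons (y : hel) a : sumd (y :: a) = hdeg y + sumd a.
Proof. by rewrite /sumd big_cons. Qed.
Lemma sumd_nil : sumd ([::] : seq hel) = 0.
Proof. by rewrite /sumd big_nil. Qed.
Lemma hdeg_app (f : coch) X l : hdeg (app f X l) = cdeg f + sumd l.
Proof. by []. Qed.

Lemma endo_cat X (u v : seq hel) : endo X (u ++ v) = endo (endo X u) v.
Proof. by rewrite /endo map_cat last_cat. Qed.
Lemma endo_cons X (y : hel) v : endo X (y :: v) = endo (htgt y) v.
Proof. by []. Qed.
Lemma endo_nil X : endo X ([::] : seq hel) = X.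
Proof. by []. Qed.
Lemma htgt_app (f : coch) X l : htgt (app f X l) = endo X l.
Proof. by []. Qed.
Lemma hsrc_app (f : coch) X l : hsrc (app f X l) = X.
Proof. by []. Qed.

End E.

Section F.
Variables (Ob : Type) (M : zmodType) (U : zmodType).
Local Notation hel := (hel Ob M).
Local Notation sh := (seq hel).

Lemma Sub2 e (G : sh -> sh -> sh -> U) :
  S2 e (fun a1 a2 => G e a1 a2) =
  S2 e (fun a1 a2 => G (a1 ++ a2) a1 a2).
Proof.
apply: eq_S2w => a1 a2 H0.
by rewrite -H0.
Qed.

Lemma Sub3 e (G : sh -> sh -> sh -> sh -> U) :
  S2 e (fun a1 r1_ => S2 r1_ (fun a2 a3 => G e a1 a2 a3)) =
  S2 e (fun a1 r2_ => S2 r2_ (fun a2 a3 => G (a1 ++ a2 ++ a3) a1 a2 a3)).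
Proof.
apply: eq_S2w => a1 t0 H0.
apply: eq_S2w => a2 a3 H1.
by rewrite -H0 -H1.
Qed.

Lemma Sub4 e (G : sh -> sh -> sh -> sh -> sh -> U) :
  S2 e (fun a1 r3_ => S2 r3_ (fun a2 r4_ => S2 r4_ (fun a3 a4 => G e a1 a2 a3 a4))) =
  S2 e (fun a1 r5_ => S2 r5_ (fun a2 r6_ => S2 r6_ (fun a3 a4 => G (a1 ++ a2 ++ a3 ++ a4) a1 a2 a3 a4))).
Proof.
apply: eq_S2w => a1 t0 H0.
apply: eq_S2w => a2 t1 H1.
apply: eq_S2w => a3 a4 H2.
by rewrite -H0 -H1 -H2.
Qed.

Lemma Sub5 e (G : sh -> sh -> sh -> sh -> sh -> sh -> U) :
  S2 e (fun a1 r7_ => S2 r7_ (fun a2 r8_ => S2 r8_ (fun a3 r9_ => S2 r9_ (fun a4 a5 => G e a1 a2 a3 a4 a5)))) =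
  S2 e (fun a1 r10_ => S2 r10_ (fun a2 r11_ => S2 r11_ (fun a3 r12_ => S2 r12_ (fun a4 a5 => G (a1 ++ a2 ++ a3 ++ a4 ++ a5) a1 a2 a3 a4 a5)))).
Proof.
apply: eq_S2w => a1 t0 H0.
apply: eq_S2w => a2 t1 H1.
apply: eq_S2w => a3 t2 H2.
apply: eq_S2w => a4 a5 H3.
by rewrite -H0 -H1 -H2 -H3.
Qed.

Lemma LS2 r (G : sh -> sh -> sh -> sh -> U) :
  S2 r (fun d e => S2 e (fun a1 a2 => G d e a1 a2)) =
  S2 r (fun d s => S2 s (fun a1 a2 => G d (a1 ++ a2) a1 a2)).
Proof. by apply: eq_S2 => d e; rewrite (Sub2 e (G d)). Qed.

Lemma LS3 r (G : sh -> sh -> sh -> sh -> sh -> U) :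
  S2 r (fun d e => S2 e (fun a1 r13_ => S2 r13_ (fun a2 a3 => G d e a1 a2 a3))) =
  S2 r (fun d s => S2 s (fun a1 r14_ => S2 r14_ (fun a2 a3 => G d (a1 ++ a2 ++ a3) a1 a2 a3))).
Proof. by apply: eq_S2 => d e; rewrite (Sub3 e (G d)). Qed.

Lemma LS4 r (G : sh -> sh -> sh -> sh -> sh -> sh -> U) :
  S2 r (fun d e => S2 e (fun a1 r15_ => S2 r15_ (fun a2 r16_ => S2 r16_ (fun a3 a4 => G d e a1 a2 a3 a4)))) =
  S2 r (fun d s => S2 s (fun a1 r17_ => S2 r17_ (fun a2 r18_ => S2 r18_ (fun a3 a4 => G d (a1 ++ a2 ++ a3 ++ a4) a1 a2 a3 a4)))).
Proof. by apply: eq_S2 => d e; rewrite (Sub4 e (G d)). Qed.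

Lemma LS5 r (G : sh -> sh -> sh -> sh -> sh -> sh -> sh -> U) :
  S2 r (fun d e => S2 e (fun a1 r19_ => S2 r19_ (fun a2 r20_ => S2 r20_ (fun a3 r21_ => S2 r21_ (fun a4 a5 => G d e a1 a2 a3 a4 a5))))) =
  S2 r (fun d s => S2 s (fun a1 r22_ => S2 r22_ (fun a2 r23_ => S2 r23_ (fun a3 r24_ => S2 r24_ (fun a4 a5 => G d (a1 ++ a2 ++ a3 ++ a4 ++ a5) a1 a2 a3 a4 a5))))).
Proof. by apply: eq_S2 => d e; rewrite (Sub5 e (G d)). Qed.

Lemma X3 r z (F : sh -> sh -> sh -> sh -> sh -> U) :
  S2 r (fun u v => S2 z (fun a1 r25_ => S2 r25_ (fun a2 a3 => F u v a1 a2 a3))) =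
  S2 z (fun a1 r26_ => S2 r26_ (fun a2 a3 => S2 r (fun u v => F u v a1 a2 a3))).
Proof. rewrite S2_exch; apply: eq_S2 => a1 t; by rewrite S2_exch. Qed.

Lemma X4 r z (F : sh -> sh -> sh -> sh -> sh -> sh -> U) :
  S2 r (fun u v => S2 z (fun a1 r27_ => S2 r27_ (fun a2 r28_ => S2 r28_ (fun a3 a4 => F u v a1 a2 a3 a4)))) =
  S2 z (fun a1 r29_ => S2 r29_ (fun a2 r30_ => S2 r30_ (fun a3 a4 => S2 r (fun u v => F u v a1 a2 a3 a4)))).
Proof. rewrite S2_exch; apply: eq_S2 => a1 t; by rewrite (X3 r t (fun u v => F u v a1)). Qed.

Lemma X5 r z (F : sh -> sh -> sh -> sh -> sh -> sh -> sh -> U) :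
  S2 r (fun u v => S2 z (fun a1 r31_ => S2 r31_ (fun a2 r32_ => S2 r32_ (fun a3 r33_ => S2 r33_ (fun a4 a5 => F u v a1 a2 a3 a4 a5))))) =
  S2 z (fun a1 r34_ => S2 r34_ (fun a2 r35_ => S2 r35_ (fun a3 r36_ => S2 r36_ (fun a4 a5 => S2 r (fun u v => F u v a1 a2 a3 a4 a5))))).
Proof. rewrite S2_exch; apply: eq_S2 => a1 t; by rewrite (X4 r t (fun u v => F u v a1)). Qed.

Lemma R3 w (F : sh -> sh -> sh -> sh -> sh -> U) :
  S2 w (fun u v => S2 u (fun a1 r37_ => S2 r37_ (fun a2 a3 => F u a1 a2 a3 v))) =
  S2 w (fun a1 r38_ => S2 r38_ (fun a2 r39_ => S2 r39_ (fun a3 v => F (a1 ++ a2 ++ a3) a1 a2 a3 v))).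
Proof.
rewrite S2_assocD; apply: eq_S2 => a1 r1.
rewrite (S2_assocD r1 (fun u a2 a3 v => F (a1 ++ u) a1 a2 a3 v)).
by apply: eq_S2 => a2 r2; apply: eq_S2 => a3 v; rewrite catA.
Qed.

Lemma R4 w (F : sh -> sh -> sh -> sh -> sh -> sh -> U) :
  S2 w (fun u v => S2 u (fun a1 r40_ => S2 r40_ (fun a2 r41_ => S2 r41_ (fun a3 a4 => F u a1 a2 a3 a4 v)))) =
  S2 w (fun a1 r42_ => S2 r42_ (fun a2 r43_ => S2 r43_ (fun a3 r44_ => S2 r44_ (fun a4 v => F (a1 ++ a2 ++ a3 ++ a4) a1 a2 a3 a4 v)))).
Proof.
rewrite S2_assocD; apply: eq_S2 => a1 r1.
rewrite (R3 r1 (fun u a2 a3 a4 v => F (a1 ++ u) a1 a2 a3 a4 v)).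
by [].
Qed.

Lemma R5 w (F : sh -> sh -> sh -> sh -> sh -> sh -> sh -> U) :
  S2 w (fun u v => S2 u (fun a1 r45_ => S2 r45_ (fun a2 r46_ => S2 r46_ (fun a3 r47_ => S2 r47_ (fun a4 a5 => F u a1 a2 a3 a4 a5 v))))) =
  S2 w (fun a1 r48_ => S2 r48_ (fun a2 r49_ => S2 r49_ (fun a3 r50_ => S2 r50_ (fun a4 r51_ => S2 r51_ (fun a5 v => F (a1 ++ a2 ++ a3 ++ a4 ++ a5) a1 a2 a3 a4 a5 v))))).
Proof.
rewrite S2_assocD; apply: eq_S2 => a1 r1.
rewrite (R4 r1 (fun u a2 a3 a4 a5 v => F (a1 ++ u) a1 a2 a3 a4 a5 v)).
by [].
Qed.

End F.

Section G.
Variables (Ob : Type) (M : zmodType) (U : zmodType).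
Local Notation hel := (hel Ob M).
Local Notation sh := (seq hel).

Lemma S3D w (F G : sh -> sh -> sh -> U) :
  S2 w (fun a1 r1_ => S2 r1_ (fun a2 a3 => F a1 a2 a3 + G a1 a2 a3)) = S2 w (fun a1 r2_ => S2 r2_ (fun a2 a3 => F a1 a2 a3)) + S2 w (fun a1 r3_ => S2 r3_ (fun a2 a3 => G a1 a2 a3)).
Proof. rewrite -S2D; apply: eq_S2 => a1 r; exact: S2D. Qed.

Lemma S3Mz w (F : sh -> sh -> sh -> U) z :
  S2 w (fun a1 r4_ => S2 r4_ (fun a2 a3 => F a1 a2 a3 *~ z)) = S2 w (fun a1 r5_ => S2 r5_ (fun a2 a3 => F a1 a2 a3)) *~ z.
Proof. rewrite -S2Mz; apply: eq_S2 => a1 r; exact: S2Mz. Qed.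

Lemma S3N w (F : sh -> sh -> sh -> U) :
  S2 w (fun a1 r6_ => S2 r6_ (fun a2 a3 => - F a1 a2 a3)) = - S2 w (fun a1 r7_ => S2 r7_ (fun a2 a3 => F a1 a2 a3)).
Proof. rewrite -S2N; apply: eq_S2 => a1 r; exact: S2N. Qed.

Lemma eq_S3 w (F G : sh -> sh -> sh -> U) :
  (forall a1 a2 a3, F a1 a2 a3 = G a1 a2 a3) -> S2 w (fun a1 r8_ => S2 r8_ (fun a2 a3 => F a1 a2 a3)) = S2 w (fun a1 r9_ => S2 r9_ (fun a2 a3 => G a1 a2 a3)).
Proof. move=> FG; apply: eq_S2 => a1 r; apply: eq_S2 => *; exact: FG. Qed.

Lemma S4D w (F G : sh -> sh -> sh -> sh -> U) :
  S2 w (fun a1 r10_ => S2 r10_ (fun a2 r11_ => S2 r11_ (fun a3 a4 => F a1 a2 a3 a4 + G a1 a2 a3 a4))) = S2 w (fun a1 r12_ => S2 r12_ (fun a2 r13_ => S2 r13_ (fun a3 a4 => F a1 a2 a3 a4))) + S2 w (fun a1 r14_ => S2 r14_ (fun a2 r15_ => S2 r15_ (fun a3 a4 => G a1 a2 a3 a4))).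
Proof. rewrite -S2D; apply: eq_S2 => a1 r; exact: S3D. Qed.

Lemma S4Mz w (F : sh -> sh -> sh -> sh -> U) z :
  S2 w (fun a1 r16_ => S2 r16_ (fun a2 r17_ => S2 r17_ (fun a3 a4 => F a1 a2 a3 a4 *~ z))) = S2 w (fun a1 r18_ => S2 r18_ (fun a2 r19_ => S2 r19_ (fun a3 a4 => F a1 a2 a3 a4))) *~ z.
Proof. rewrite -S2Mz; apply: eq_S2 => a1 r; exact: S3Mz. Qed.

Lemma S4N w (F : sh -> sh -> sh -> sh -> U) :
  S2 w (fun a1 r20_ => S2 r20_ (fun a2 r21_ => S2 r21_ (fun a3 a4 => - F a1 a2 a3 a4))) = - S2 w (fun a1 r22_ => S2 r22_ (fun a2 r23_ => S2 r23_ (fun a3 a4 => F a1 a2 a3 a4))).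
Proof. rewrite -S2N; apply: eq_S2 => a1 r; exact: S3N. Qed.

Lemma eq_S4 w (F G : sh -> sh -> sh -> sh -> U) :
  (forall a1 a2 a3 a4, F a1 a2 a3 a4 = G a1 a2 a3 a4) -> S2 w (fun a1 r24_ => S2 r24_ (fun a2 r25_ => S2 r25_ (fun a3 a4 => F a1 a2 a3 a4))) = S2 w (fun a1 r26_ => S2 r26_ (fun a2 r27_ => S2 r27_ (fun a3 a4 => G a1 a2 a3 a4))).
Proof. move=> FG; apply: eq_S2 => a1 r; apply: eq_S3 => *; exact: FG. Qed.

Lemma S5D w (F G : sh -> sh -> sh -> sh -> sh -> U) :
  S2 w (fun a1 r28_ => S2 r28_ (fun a2 r29_ => S2 r29_ (fun a3 r30_ => S2 r30_ (fun a4 a5 => F a1 a2 a3 a4 a5 + G a1 a2 a3 a4 a5)))) = S2 w (fun a1 r31_ => S2 r31_ (fun a2 r32_ => S2 r32_ (fun a3 r33_ => S2 r33_ (fun a4 a5 => F a1 a2 a3 a4 a5)))) + S2 w (fun a1 r34_ => S2 r34_ (fun a2 r35_ => S2 r35_ (fun a3 r36_ => S2 r36_ (fun a4 a5 => G a1 a2 a3 a4 a5)))).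
Proof. rewrite -S2D; apply: eq_S2 => a1 r; exact: S4D. Qed.

Lemma S5Mz w (F : sh -> sh -> sh -> sh -> sh -> U) z :
  S2 w (fun a1 r37_ => S2 r37_ (fun a2 r38_ => S2 r38_ (fun a3 r39_ => S2 r39_ (fun a4 a5 => F a1 a2 a3 a4 a5 *~ z)))) = S2 w (fun a1 r40_ => S2 r40_ (fun a2 r41_ => S2 r41_ (fun a3 r42_ => S2 r42_ (fun a4 a5 => F a1 a2 a3 a4 a5)))) *~ z.
Proof. rewrite -S2Mz; apply: eq_S2 => a1 r; exact: S4Mz. Qed.

Lemma S5N w (F : sh -> sh -> sh -> sh -> sh -> U) :
  S2 w (fun a1 r43_ => S2 r43_ (fun a2 r44_ => S2 r44_ (fun a3 r45_ => S2 r45_ (fun a4 a5 => - F a1 a2 a3 a4 a5)))) = - S2 w (fun a1 r46_ => S2 r46_ (fun a2 r47_ => S2 r47_ (fun a3 r48_ => S2 r48_ (fun a4 a5 => F a1 a2 a3 a4 a5)))).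
Proof. rewrite -S2N; apply: eq_S2 => a1 r; exact: S4N. Qed.

Lemma eq_S5 w (F G : sh -> sh -> sh -> sh -> sh -> U) :
  (forall a1 a2 a3 a4 a5, F a1 a2 a3 a4 a5 = G a1 a2 a3 a4 a5) -> S2 w (fun a1 r49_ => S2 r49_ (fun a2 r50_ => S2 r50_ (fun a3 r51_ => S2 r51_ (fun a4 a5 => F a1 a2 a3 a4 a5)))) = S2 w (fun a1 r52_ => S2 r52_ (fun a2 r53_ => S2 r53_ (fun a3 r54_ => S2 r54_ (fun a4 a5 => G a1 a2 a3 a4 a5)))).
Proof. move=> FG; apply: eq_S2 => a1 r; apply: eq_S4 => *; exact: FG. Qed.

Lemma S6D w (F G : sh -> sh -> sh -> sh -> sh -> sh -> U) :
  S2 w (fun a1 r55_ => S2 r55_ (fun a2 r56_ => S2 r56_ (fun a3 r57_ => S2 r57_ (fun a4 r58_ => S2 r58_ (fun a5 a6 => F a1 a2 a3 a4 a5 a6 + G a1 a2 a3 a4 a5 a6))))) = S2 w (fun a1 r59_ => S2 r59_ (fun a2 r60_ => S2 r60_ (fun a3 r61_ => S2 r61_ (fun a4 r62_ => S2 r62_ (fun a5 a6 => F a1 a2 a3 a4 a5 a6))))) + S2 w (fun a1 r63_ => S2 r63_ (fun a2 r64_ => S2 r64_ (fun a3 r65_ => S2 r65_ (fun a4 r66_ => S2 r66_ (fun a5 a6 => G a1 a2 a3 a4 a5 a6))))).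
Proof. rewrite -S2D; apply: eq_S2 => a1 r; exact: S5D. Qed.

Lemma S6Mz w (F : sh -> sh -> sh -> sh -> sh -> sh -> U) z :
  S2 w (fun a1 r67_ => S2 r67_ (fun a2 r68_ => S2 r68_ (fun a3 r69_ => S2 r69_ (fun a4 r70_ => S2 r70_ (fun a5 a6 => F a1 a2 a3 a4 a5 a6 *~ z))))) = S2 w (fun a1 r71_ => S2 r71_ (fun a2 r72_ => S2 r72_ (fun a3 r73_ => S2 r73_ (fun a4 r74_ => S2 r74_ (fun a5 a6 => F a1 a2 a3 a4 a5 a6))))) *~ z.
Proof. rewrite -S2Mz; apply: eq_S2 => a1 r; exact: S5Mz. Qed.

Lemma S6N w (F : sh -> sh -> sh -> sh -> sh -> sh -> U) :
  S2 w (fun a1 r75_ => S2 r75_ (fun a2 r76_ => S2 r76_ (fun a3 r77_ => S2 r77_ (fun a4 r78_ => S2 r78_ (fun a5 a6 => - F a1 a2 a3 a4 a5 a6))))) = - S2 w (fun a1 r79_ => S2 r79_ (fun a2 r80_ => S2 r80_ (fun a3 r81_ => S2 r81_ (fun a4 r82_ => S2 r82_ (fun a5 a6 => F a1 a2 a3 a4 a5 a6))))).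
Proof. rewrite -S2N; apply: eq_S2 => a1 r; exact: S5N. Qed.

Lemma eq_S6 w (F G : sh -> sh -> sh -> sh -> sh -> sh -> U) :
  (forall a1 a2 a3 a4 a5 a6, F a1 a2 a3 a4 a5 a6 = G a1 a2 a3 a4 a5 a6) -> S2 w (fun a1 r83_ => S2 r83_ (fun a2 r84_ => S2 r84_ (fun a3 r85_ => S2 r85_ (fun a4 r86_ => S2 r86_ (fun a5 a6 => F a1 a2 a3 a4 a5 a6))))) = S2 w (fun a1 r87_ => S2 r87_ (fun a2 r88_ => S2 r88_ (fun a3 r89_ => S2 r89_ (fun a4 r90_ => S2 r90_ (fun a5 a6 => G a1 a2 a3 a4 a5 a6))))).
Proof. move=> FG; apply: eq_S2 => a1 r; apply: eq_S5 => *; exact: FG. Qed.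

Lemma S7D w (F G : sh -> sh -> sh -> sh -> sh -> sh -> sh -> U) :
  S2 w (fun a1 r91_ => S2 r91_ (fun a2 r92_ => S2 r92_ (fun a3 r93_ => S2 r93_ (fun a4 r94_ => S2 r94_ (fun a5 r95_ => S2 r95_ (fun a6 a7 => F a1 a2 a3 a4 a5 a6 a7 + G a1 a2 a3 a4 a5 a6 a7)))))) = S2 w (fun a1 r96_ => S2 r96_ (fun a2 r97_ => S2 r97_ (fun a3 r98_ => S2 r98_ (fun a4 r99_ => S2 r99_ (fun a5 r100_ => S2 r100_ (fun a6 a7 => F a1 a2 a3 a4 a5 a6 a7)))))) + S2 w (fun a1 r101_ => S2 r101_ (fun a2 r102_ => S2 r102_ (fun a3 r103_ => S2 r103_ (fun a4 r104_ => S2 r104_ (fun a5 r105_ => S2 r105_ (fun a6 a7 => G a1 a2 a3 a4 a5 a6 a7)))))).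
Proof. rewrite -S2D; apply: eq_S2 => a1 r; exact: S6D. Qed.

Lemma S7Mz w (F : sh -> sh -> sh -> sh -> sh -> sh -> sh -> U) z :
  S2 w (fun a1 r106_ => S2 r106_ (fun a2 r107_ => S2 r107_ (fun a3 r108_ => S2 r108_ (fun a4 r109_ => S2 r109_ (fun a5 r110_ => S2 r110_ (fun a6 a7 => F a1 a2 a3 a4 a5 a6 a7 *~ z)))))) = S2 w (fun a1 r111_ => S2 r111_ (fun a2 r112_ => S2 r112_ (fun a3 r113_ => S2 r113_ (fun a4 r114_ => S2 r114_ (fun a5 r115_ => S2 r115_ (fun a6 a7 => F a1 a2 a3 a4 a5 a6 a7)))))) *~ z.
Proof. rewrite -S2Mz; apply: eq_S2 => a1 r; exact: S6Mz. Qed.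

Lemma S7N w (F : sh -> sh -> sh -> sh -> sh -> sh -> sh -> U) :
  S2 w (fun a1 r116_ => S2 r116_ (fun a2 r117_ => S2 r117_ (fun a3 r118_ => S2 r118_ (fun a4 r119_ => S2 r119_ (fun a5 r120_ => S2 r120_ (fun a6 a7 => - F a1 a2 a3 a4 a5 a6 a7)))))) = - S2 w (fun a1 r121_ => S2 r121_ (fun a2 r122_ => S2 r122_ (fun a3 r123_ => S2 r123_ (fun a4 r124_ => S2 r124_ (fun a5 r125_ => S2 r125_ (fun a6 a7 => F a1 a2 a3 a4 a5 a6 a7)))))).
Proof. rewrite -S2N; apply: eq_S2 => a1 r; exact: S6N. Qed.

Lemma eq_S7 w (F G : sh -> sh -> sh -> sh -> sh -> sh -> sh -> U) :
  (forall a1 a2 a3 a4 a5 a6 a7, F a1 a2 a3 a4 a5 a6 a7 = G a1 a2 a3 a4 a5 a6 a7) -> S2 w (fun a1 r126_ => S2 r126_ (fun a2 r127_ => S2 r127_ (fun a3 r128_ => S2 r128_ (fun a4 r129_ => S2 r129_ (fun a5 r130_ => S2 r130_ (fun a6 a7 => F a1 a2 a3 a4 a5 a6 a7)))))) = S2 w (fun a1 r131_ => S2 r131_ (fun a2 r132_ => S2 r132_ (fun a3 r133_ => S2 r133_ (fun a4 r134_ => S2 r134_ (fun a5 r135_ => S2 r135_ (fun a6 a7 => G a1 a2 a3 a4 a5 a6 a7)))))).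
Proof. move=> FG; apply: eq_S2 => a1 r; apply: eq_S6 => *; exact: FG. Qed.

Lemma Pb w (F : sh -> sh -> sh -> sh -> sh -> sh -> sh -> sh -> U) :
  S2 w (fun a r137_ => S2 r137_ (fun b r138_ => S2 r138_ (fun c r139_ => S2 r139_ (fun d e => S2 b (fun p r136_ => S2 r136_ (fun q r => F a b c d e p q r)))))) =
  S2 w (fun a r140_ => S2 r140_ (fun p r141_ => S2 r141_ (fun q r142_ => S2 r142_ (fun r r143_ => S2 r143_ (fun c r144_ => S2 r144_ (fun d e => F a (p ++ q ++ r) c d e p q r)))))).
Proof.
apply: eq_S2 => a r1.
under eq_S2 => b r2 do under eq_S2 => c r3 do rewrite X3.
under eq_S2 => b r2 do rewrite X3.
by rewrite R3.
Qed.

Lemma Pd w (F : sh -> sh -> sh -> sh -> sh -> sh -> sh -> sh -> U) :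
  S2 w (fun a r146_ => S2 r146_ (fun b r147_ => S2 r147_ (fun c r148_ => S2 r148_ (fun d e => S2 d (fun p r145_ => S2 r145_ (fun q r => F a b c d e p q r)))))) =
  S2 w (fun a r149_ => S2 r149_ (fun b r150_ => S2 r150_ (fun c r151_ => S2 r151_ (fun p r152_ => S2 r152_ (fun q r153_ => S2 r153_ (fun r e => F a b c (p ++ q ++ r) e p q r)))))).
Proof.
apply: eq_S2 => a r1; apply: eq_S2 => b r2; apply: eq_S2 => c r3.
by rewrite R3.
Qed.

Lemma Acc w (F : sh -> sh -> sh -> sh -> sh -> sh -> sh -> sh -> U) :
  S2 w (fun a r155_ => S2 r155_ (fun b r156_ => S2 r156_ (fun c r157_ => S2 r157_ (fun d e => S2 c (fun x1 r154_ => S2 r154_ (fun x2 x3 => F a b c d e x1 x2 x3)))))) =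
  S2 w (fun a r158_ => S2 r158_ (fun b r159_ => S2 r159_ (fun x1 r160_ => S2 r160_ (fun x2 r161_ => S2 r161_ (fun x3 r162_ => S2 r162_ (fun d e => F a b (x1 ++ x2 ++ x3) d e x1 x2 x3)))))).
Proof.
apply: eq_S2 => a r1; apply: eq_S2 => b r2.
under eq_S2 => c r3 do rewrite X3.
by rewrite R3.
Qed.

Lemma Ace w (F : sh -> sh -> sh -> sh -> sh -> sh -> sh -> sh -> sh -> U) :
  S2 w (fun a r163_ => S2 r163_ (fun b r164_ => S2 r164_ (fun c r165_ => S2 r165_ (fun d e => S2 c (fun x1 x2 => S2 e (fun y1 y2 => F a b c d e x1 x2 y1 y2)))))) =
  S2 w (fun a r166_ => S2 r166_ (fun b r167_ => S2 r167_ (fun x1 r168_ => S2 r168_ (fun x2 r169_ => S2 r169_ (fun d r170_ => S2 r170_ (fun y1 y2 => F a b (x1 ++ x2) d (y1 ++ y2) x1 x2 y1 y2)))))).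
Proof.
apply: eq_S2 => a r1; apply: eq_S2 => b r2.
under eq_S2 => c r3 do rewrite S2_exch.
rewrite S2_assocD; apply: eq_S2 => x1 s; apply: eq_S2 => x2 r3.
by rewrite LS2.
Qed.

Lemma Aca w (F : sh -> sh -> sh -> sh -> sh -> sh -> sh -> sh -> sh -> U) :
  S2 w (fun a r171_ => S2 r171_ (fun b r172_ => S2 r172_ (fun c r173_ => S2 r173_ (fun d e => S2 c (fun x1 x2 => S2 a (fun y1 y2 => F a b c d e x1 x2 y1 y2)))))) =
  S2 w (fun y1 r174_ => S2 r174_ (fun y2 r175_ => S2 r175_ (fun b r176_ => S2 r176_ (fun x1 r177_ => S2 r177_ (fun x2 r178_ => S2 r178_ (fun d e => F (y1 ++ y2) b (x1 ++ x2) d e x1 x2 y1 y2)))))).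
Proof.
under eq_S2 => a r1 do under eq_S2 => b r2 do under eq_S2 => c r3 do under eq_S2 => d e do rewrite S2_exch.
under eq_S2 => a r1 do under eq_S2 => b r2 do under eq_S2 => c r3 do rewrite S2_exch.
under eq_S2 => a r1 do under eq_S2 => b r2 do rewrite S2_exch.
under eq_S2 => a r1 do rewrite S2_exch.
rewrite S2_assocD; apply: eq_S2 => y1 s; apply: eq_S2 => y2 r1; apply: eq_S2 => b r2.
under eq_S2 => c r3 do rewrite S2_exch.
by rewrite S2_assocD.
Qed.

Lemma Aee w (F : sh -> sh -> sh -> sh -> sh -> sh -> sh -> sh -> U) :
  S2 w (fun a r180_ => S2 r180_ (fun b r181_ => S2 r181_ (fun c r182_ => S2 r182_ (fun d e => S2 e (fun x1 r179_ => S2 r179_ (fun x2 x3 => F a b c d e x1 x2 x3)))))) =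
  S2 w (fun a r183_ => S2 r183_ (fun b r184_ => S2 r184_ (fun c r185_ => S2 r185_ (fun d r186_ => S2 r186_ (fun x1 r187_ => S2 r187_ (fun x2 x3 => F a b c d (x1 ++ x2 ++ x3) x1 x2 x3)))))).
Proof.
apply: eq_S2 => a r1; apply: eq_S2 => b r2; apply: eq_S2 => c r3.
by rewrite LS3.
Qed.

Lemma Aea w (F : sh -> sh -> sh -> sh -> sh -> sh -> sh -> sh -> sh -> U) :
  S2 w (fun a r188_ => S2 r188_ (fun b r189_ => S2 r189_ (fun c r190_ => S2 r190_ (fun d e => S2 e (fun x1 x2 => S2 a (fun y1 y2 => F a b c d e x1 x2 y1 y2)))))) =
  S2 w (fun y1 r191_ => S2 r191_ (fun y2 r192_ => S2 r192_ (fun b r193_ => S2 r193_ (fun c r194_ => S2 r194_ (fun d r195_ => S2 r195_ (fun x1 x2 => F (y1 ++ y2) b c d (x1 ++ x2) x1 x2 y1 y2)))))).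
Proof.
under eq_S2 => a r1 do under eq_S2 => b r2 do under eq_S2 => c r3 do under eq_S2 => d e do rewrite S2_exch.
under eq_S2 => a r1 do under eq_S2 => b r2 do under eq_S2 => c r3 do rewrite S2_exch.
under eq_S2 => a r1 do under eq_S2 => b r2 do rewrite S2_exch.
under eq_S2 => a r1 do rewrite S2_exch.
rewrite S2_assocD; apply: eq_S2 => y1 s; apply: eq_S2 => y2 r1; apply: eq_S2 => b r2; apply: eq_S2 => c r3.
by rewrite LS2.
Qed.

Lemma Aaa w (F : sh -> sh -> sh -> sh -> sh -> sh -> sh -> sh -> U) :
  S2 w (fun a r197_ => S2 r197_ (fun b r198_ => S2 r198_ (fun c r199_ => S2 r199_ (fun d e => S2 a (fun x1 r196_ => S2 r196_ (fun x2 x3 => F a b c d e x1 x2 x3)))))) =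
  S2 w (fun x1 r200_ => S2 r200_ (fun x2 r201_ => S2 r201_ (fun x3 r202_ => S2 r202_ (fun b r203_ => S2 r203_ (fun c r204_ => S2 r204_ (fun d e => F (x1 ++ x2 ++ x3) b c d e x1 x2 x3)))))).
Proof.
under eq_S2 => a r1 do under eq_S2 => b r2 do under eq_S2 => c r3 do rewrite X3.
under eq_S2 => a r1 do under eq_S2 => b r2 do rewrite X3.
under eq_S2 => a r1 do rewrite X3.
by rewrite R3.
Qed.

Lemma YL2 w (F : sh -> sh -> sh -> sh -> sh -> sh -> sh -> sh -> U) :
  S2 w (fun a r208_ => S2 r208_ (fun b c => S2 b (fun x1 r205_ => S2 r205_ (fun x2 r206_ => S2 r206_ (fun x3 r207_ => S2 r207_ (fun x4 x5 => F a b c x1 x2 x3 x4 x5)))))) =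
  S2 w (fun a r209_ => S2 r209_ (fun x1 r210_ => S2 r210_ (fun x2 r211_ => S2 r211_ (fun x3 r212_ => S2 r212_ (fun x4 r213_ => S2 r213_ (fun x5 c => F a (x1 ++ x2 ++ x3 ++ x4 ++ x5) c x1 x2 x3 x4 x5)))))).
Proof.
apply: eq_S2 => a r1.
by rewrite R5.
Qed.

Lemma Yk0 w (F : sh -> sh -> sh -> sh -> sh -> sh -> sh -> sh -> U) :
  S2 w (fun a r217_ => S2 r217_ (fun b c => S2 c (fun x1 r214_ => S2 r214_ (fun x2 r215_ => S2 r215_ (fun x3 r216_ => S2 r216_ (fun x4 x5 => F a b c x1 x2 x3 x4 x5)))))) =
  S2 w (fun a r218_ => S2 r218_ (fun b r219_ => S2 r219_ (fun x1 r220_ => S2 r220_ (fun x2 r221_ => S2 r221_ (fun x3 r222_ => S2 r222_ (fun x4 x5 => F a b (x1 ++ x2 ++ x3 ++ x4 ++ x5) x1 x2 x3 x4 x5)))))).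
Proof.
apply: eq_S2 => a r1.
by rewrite LS5.
Qed.

Lemma Yk1 w (F : sh -> sh -> sh -> sh -> sh -> sh -> sh -> sh -> sh -> U) :
  S2 w (fun a r225_ => S2 r225_ (fun b c => S2 a (fun y1 y2 => S2 c (fun x1 r223_ => S2 r223_ (fun x2 r224_ => S2 r224_ (fun x3 x4 => F a b c y1 y2 x1 x2 x3 x4)))))) =
  S2 w (fun y1 r226_ => S2 r226_ (fun y2 r227_ => S2 r227_ (fun b r228_ => S2 r228_ (fun x1 r229_ => S2 r229_ (fun x2 r230_ => S2 r230_ (fun x3 x4 => F (y1 ++ y2) b (x1 ++ x2 ++ x3 ++ x4) y1 y2 x1 x2 x3 x4)))))).
Proof.
under eq_S2 => a r1 do rewrite S2_exch.
rewrite S2_assocD; apply: eq_S2 => y1 s; apply: eq_S2 => y2 r1.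
by rewrite LS4.
Qed.

Lemma Yk2 w (F : sh -> sh -> sh -> sh -> sh -> sh -> sh -> sh -> sh -> U) :
  S2 w (fun a r233_ => S2 r233_ (fun b c => S2 a (fun y1 r232_ => S2 r232_ (fun y2 y3 => S2 c (fun x1 r231_ => S2 r231_ (fun x2 x3 => F a b c y1 y2 y3 x1 x2 x3)))))) =
  S2 w (fun y1 r234_ => S2 r234_ (fun y2 r235_ => S2 r235_ (fun y3 r236_ => S2 r236_ (fun b r237_ => S2 r237_ (fun x1 r238_ => S2 r238_ (fun x2 x3 => F (y1 ++ y2 ++ y3) b (x1 ++ x2 ++ x3) y1 y2 y3 x1 x2 x3)))))).
Proof.
under eq_S2 => a r1 do rewrite X3.
rewrite R3; apply: eq_S2 => y1 s1; apply: eq_S2 => y2 s2; apply: eq_S2 => y3 r1.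
by rewrite LS3.
Qed.

Lemma Yk3 w (F : sh -> sh -> sh -> sh -> sh -> sh -> sh -> sh -> sh -> U) :
  S2 w (fun a r241_ => S2 r241_ (fun b c => S2 a (fun y1 r239_ => S2 r239_ (fun y2 r240_ => S2 r240_ (fun y3 y4 => S2 c (fun x1 x2 => F a b c y1 y2 y3 y4 x1 x2)))))) =
  S2 w (fun y1 r242_ => S2 r242_ (fun y2 r243_ => S2 r243_ (fun y3 r244_ => S2 r244_ (fun y4 r245_ => S2 r245_ (fun b r246_ => S2 r246_ (fun x1 x2 => F (y1 ++ y2 ++ y3 ++ y4) b (x1 ++ x2) y1 y2 y3 y4 x1 x2)))))).
Proof.
under eq_S2 => a r1 do rewrite X4.
rewrite R4; apply: eq_S2 => y1 s1; apply: eq_S2 => y2 s2; apply: eq_S2 => y3 s3; apply: eq_S2 => y4 r1.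
by rewrite LS2.
Qed.

Lemma Yk4 w (F : sh -> sh -> sh -> sh -> sh -> sh -> sh -> sh -> U) :
  S2 w (fun a r250_ => S2 r250_ (fun b c => S2 a (fun y1 r247_ => S2 r247_ (fun y2 r248_ => S2 r248_ (fun y3 r249_ => S2 r249_ (fun y4 y5 => F a b c y1 y2 y3 y4 y5)))))) =
  S2 w (fun y1 r251_ => S2 r251_ (fun y2 r252_ => S2 r252_ (fun y3 r253_ => S2 r253_ (fun y4 r254_ => S2 r254_ (fun y5 r255_ => S2 r255_ (fun b c => F (y1 ++ y2 ++ y3 ++ y4 ++ y5) b c y1 y2 y3 y4 y5)))))).
Proof.
under eq_S2 => a r1 do rewrite X5.
by rewrite R5.
Qed.

End G.

Section H.
Variables (Ob : Type) (M : zmodType) (U : zmodType).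
Local Notation hel := (hel Ob M).
Local Notation sh := (seq hel).

Lemma Dec6 c e a (y z : hel) (F : sh -> sh -> sh -> U) :
  S2 (c ++ y :: e ++ z :: a) (fun x1 t => S2 t (fun x2 x3 => F x1 x2 x3)) =
  S2 c (fun x1 q => S2 q (fun x2 q' => F x1 x2 (q' ++ y :: e ++ z :: a)))
  + S2 c (fun x1 q => S2 e (fun p q' => F x1 (q ++ y :: p) (q' ++ z :: a)))
  + S2 c (fun x1 q => S2 a (fun p q' => F x1 (q ++ y :: e ++ z :: p) q'))
  + S2 e (fun p t => S2 t (fun x2 x3 => F (c ++ y :: p) x2 (x3 ++ z :: a)))
  + S2 e (fun p t => S2 a (fun x2 x3 => F (c ++ y :: p) (t ++ z :: x2) x3))
  + S2 a (fun p t => S2 t (fun x2 x3 => F (c ++ y :: e ++ z :: p) x2 x3)).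
Proof.
have E2 : S2 (e ++ z :: a) (fun p t => S2 t (fun x2 x3 => F (c ++ y :: p) x2 x3)) =
  S2 e (fun p t => S2 t (fun x2 x3 => F (c ++ y :: p) x2 (x3 ++ z :: a)))
  + S2 e (fun p t => S2 a (fun x2 x3 => F (c ++ y :: p) (t ++ z :: x2) x3))
  + S2 a (fun p t => S2 t (fun x2 x3 => F (c ++ y :: e ++ z :: p) x2 x3)).
  rewrite S2_cat_cons; under eq_S2 => p t do rewrite S2_cat_cons.
  by rewrite S2D.
rewrite S2_cat_cons E2.
under eq_S2 => x1 q do rewrite S2_cat_cons S2_cat_cons.
by rewrite !S2D !addrA.
Qed.

Lemma Dec5 u (y : hel) v (F : sh -> sh -> sh -> sh -> sh -> U) :
  S2 (u ++ y :: v) (fun x1 r4_ => S2 r4_ (fun x2 r5_ => S2 r5_ (fun x3 r6_ => S2 r6_ (fun x4 x5 => F x1 x2 x3 x4 x5)))) =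
  S2 u (fun x1 q => S2 q (fun x2 q' => S2 q' (fun x3 q'' => S2 q'' (fun x4 t => F x1 x2 x3 x4 (t ++ y :: v)))))
  + S2 u (fun x1 q => S2 q (fun x2 q' => S2 q' (fun x3 q'' => S2 v (fun p t => F x1 x2 x3 (q'' ++ y :: p) t))))
  + S2 u (fun x1 q => S2 q (fun x2 q' => S2 v (fun p t => S2 t (fun x4 x5 => F x1 x2 (q' ++ y :: p) x4 x5))))
  + S2 u (fun x1 q => S2 v (fun p q2 => S2 q2 (fun x3 r3_ => S2 r3_ (fun x4 x5 => F x1 (q ++ y :: p) x3 x4 x5))))
  + S2 v (fun p q => S2 q (fun x2 r1_ => S2 r1_ (fun x3 r2_ => S2 r2_ (fun x4 x5 => F (u ++ y :: p) x2 x3 x4 x5)))).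
Proof.

rewrite S2_cat_cons.
under eq_S2 => x1 q do rewrite S2_cat_cons.
under eq_S2 => x1 q do under eq_S2 => x2 q' do rewrite S2_cat_cons.
under eq_S2 => x1 q do under eq_S2 => x2 q' do under eq_S2 => x3 q'' do rewrite S2_cat_cons.
under eq_S2 => x1 q do under eq_S2 => x2 q' do rewrite S2D.
under eq_S2 => x1 q do rewrite S2D S2D.
by rewrite !S2D ?addrA.
Qed.

End H.

Section I.
Variables (Ob : Type) (M : zmodType) (V : zmodType).
Local Notation hel := (hel Ob M).
Local Notation sh := (seq hel).
Local Notation coch := (coch Ob M).
Local Notation chain := (chain Ob M).
Variable tens : seq M -> V.
Hypothesis tens_add : forall (w1 w2 : seq M) (a b : M),
      tens (w1 ++ (a + b) :: w2) = tens (w1 ++ a :: w2) + tens (w1 ++ b :: w2).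
Variables (g : coch) (x : hel) (w : sh).

Definition T (ws : sh) : V := tens (map (@hval Ob M) ws).
Definition Ev (c : chain) : V := sumc c (fun s ws => T ws *~ s).
Definition compd (n : int) (f h : coch) : coch := Coch n (ccomp f h).
Definition Xo (a b : sh) := endo (hsrc x) (x :: a ++ b).
Definition Yo (a b c : sh) := endo (hsrc x) (x :: a ++ b ++ c).
Definition Gg (a b c d : sh) := app g (endo (hsrc x) (x :: a ++ b ++ c)) d.
Definition sigd (m : int) (a b c d e : sh) :=
  spow (m * sumd c + sumd (x :: a ++ b) * sumd (c ++ d ++ e)).
Definition sig := sigd (cdeg g).
Definition Hf (f : coch) (a b c d e : sh) := app f (Xo a b) (c ++ Gg a b c d :: e ++ x :: a).

Lemma hadd0 (rest : seq M) : forall a b, tens ((a + b) :: rest) = tens (a :: rest) + tens (b :: rest).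
Proof. by move=> a b; apply: (tens_add [::]). Qed.

Definition bodyA (fa fb : coch) (a b c d e a1 a2 a3 : sh) :=
  T (app fa (Xo a b) (a1 ++ app fb (endo (Xo a b) a1) a2 :: a3) :: b)
    *~ spow (cdeg fb * sumd a1) *~ sig a b c d e.

Lemma NF_A1 n (fa fb : coch) :
  Ev (rho (compd n fa fb) g (x :: w)) =
  S2 w (fun a r1_ => S2 r1_ (fun b r2_ => S2 r2_ (fun c r3_ => S2 r3_ (fun d e => S2 (c ++ Gg a b c d :: e ++ x :: a) (fun a1 t => S2 t (fun a2 a3 => bodyA fa fb a b c d e a1 a2 a3)))))).
Proof.
rewrite /Ev rho_S; apply: eq_S5 => a b c d e.
rewrite [T _]/T /= ccomp_S (S2_add_fun (hadd0 _)).
under eq_S2 => a1 t do rewrite (S2_add_fun (hadd0 _)).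
under eq_S2 => a1 t do under eq_S2 => a2 a3 do rewrite (add_Mz (hadd0 _)).
by rewrite -S3Mz.
Qed.

Definition Acc_t (fa fb : coch) : V :=
  S2 w (fun a r4_ => S2 r4_ (fun b r5_ => S2 r5_ (fun x1 r6_ => S2 r6_ (fun x2 r7_ => S2 r7_ (fun x3 r8_ => S2 r8_ (fun d e => bodyA fa fb a b (x1 ++ x2 ++ x3) d e x1 x2 (x3 ++ Gg a b (x1 ++ x2 ++ x3) d :: e ++ x :: a))))))).

Definition Ace_t (fa fb : coch) : V :=
  S2 w (fun a r9_ => S2 r9_ (fun b r10_ => S2 r10_ (fun x1 r11_ => S2 r11_ (fun x2 r12_ => S2 r12_ (fun d r13_ => S2 r13_ (fun y1 y2 => bodyA fa fb a b (x1 ++ x2) d (y1 ++ y2) x1 (x2 ++ Gg a b (x1 ++ x2) d :: y1) (y2 ++ x :: a))))))).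

Definition Aca_t (fa fb : coch) : V :=
  S2 w (fun y1 r14_ => S2 r14_ (fun y2 r15_ => S2 r15_ (fun b r16_ => S2 r16_ (fun x1 r17_ => S2 r17_ (fun x2 r18_ => S2 r18_ (fun d e => bodyA fa fb (y1 ++ y2) b (x1 ++ x2) d e x1 (x2 ++ Gg (y1 ++ y2) b (x1 ++ x2) d :: e ++ x :: y1) y2)))))).

Definition Aee_t (fa fb : coch) : V :=
  S2 w (fun a r19_ => S2 r19_ (fun b r20_ => S2 r20_ (fun c r21_ => S2 r21_ (fun d r22_ => S2 r22_ (fun x1 r23_ => S2 r23_ (fun x2 x3 => bodyA fa fb a b c d (x1 ++ x2 ++ x3) (c ++ Gg a b c d :: x1) x2 (x3 ++ x :: a))))))).

Definition Aea_t (fa fb : coch) : V :=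
  S2 w (fun y1 r24_ => S2 r24_ (fun y2 r25_ => S2 r25_ (fun b r26_ => S2 r26_ (fun c r27_ => S2 r27_ (fun d r28_ => S2 r28_ (fun x1 x2 => bodyA fa fb (y1 ++ y2) b c d (x1 ++ x2) (c ++ Gg (y1 ++ y2) b c d :: x1) (x2 ++ x :: y1) y2)))))).

Definition Aaa_t (fa fb : coch) : V :=
  S2 w (fun x1 r29_ => S2 r29_ (fun x2 r30_ => S2 r30_ (fun x3 r31_ => S2 r31_ (fun b r32_ => S2 r32_ (fun c r33_ => S2 r33_ (fun d e => bodyA fa fb (x1 ++ x2 ++ x3) b c d e (c ++ Gg (x1 ++ x2 ++ x3) b c d :: e ++ x :: x1) x2 x3)))))).

Lemma NF_A n (fa fb : coch) :
  Ev (rho (compd n fa fb) g (x :: w)) =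
  Acc_t fa fb + Ace_t fa fb + Aca_t fa fb + Aee_t fa fb + Aea_t fa fb + Aaa_t fa fb.
Proof.
rewrite NF_A1.
under eq_S2 => a r1 do under eq_S2 => b r2 do under eq_S2 => c r3 do under eq_S2 => d e do rewrite Dec6.
rewrite !S5D.
rewrite Aee Acc Ace Aca Aea Aaa.
by [].
Qed.

Definition cadd (f : coch) := forall X0 w1 w2 X Y d (a b : M),
     cfun f X0 (w1 ++ HEl X Y d (a + b) :: w2)
     = cfun f X0 (w1 ++ HEl X Y d a :: w2) + cfun f X0 (w1 ++ HEl X Y d b :: w2).

Definition bodyB n (fa fb : coch) (a b c d e d1 d2 d3 : sh) :=
  T (app fa (Xo a b) (c ++ HEl (Yo a b c) (endo (Yo a b c) d) (n + sumd d)
        (cfun fb (Yo a b c) (d1 ++ app g (endo (Yo a b c) d1) d2 :: d3)) :: e ++ x :: a) :: b)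
    *~ spow (cdeg g * sumd d1) *~ sigd n a b c d e.
Definition bodyC n (fa fb : coch) (a b c d e d1 d2 d3 : sh) :=
  T (app fa (Xo a b) (c ++ HEl (Yo a b c) (endo (Yo a b c) d) (n + sumd d)
        (cfun g (Yo a b c) (d1 ++ app fb (endo (Yo a b c) d1) d2 :: d3)) :: e ++ x :: a) :: b)
    *~ spow (cdeg fb * sumd d1) *~ sigd n a b c d e.

Definition B_t n (fa fb : coch) : V :=
  S2 w (fun a r34_ => S2 r34_ (fun b r35_ => S2 r35_ (fun c r36_ => S2 r36_ (fun d1 r37_ => S2 r37_ (fun d2 r38_ => S2 r38_ (fun d3 e => bodyB n fa fb a b c (d1 ++ d2 ++ d3) e d1 d2 d3)))))).

Lemma NF_B n (fa fb : coch) (Hfa : cadd fa) :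
  Ev (rho fa (compd n fb g) (x :: w)) = B_t n fa fb.
Proof.
rewrite /Ev rho_S /B_t -Pd; apply: eq_S5 => a b c d e.
rewrite (_ : T _ = tens (cfun fa (Xo a b) (c ++ HEl (Yo a b c) (endo (Yo a b c) d) (n + sumd d)
         (ccomp fb g (Yo a b c) d) :: e ++ x :: a) :: map (@hval Ob M) b)); last by [].
have h1 : forall u v : M, cfun fa (Xo a b) (c ++ HEl (Yo a b c) (endo (Yo a b c) d) (n + sumd d) (u + v) :: e ++ x :: a)
   = cfun fa (Xo a b) (c ++ HEl (Yo a b c) (endo (Yo a b c) d) (n + sumd d) u :: e ++ x :: a)
   + cfun fa (Xo a b) (c ++ HEl (Yo a b c) (endo (Yo a b c) d) (n + sumd d) v :: e ++ x :: a).
  by move=> u v; apply: Hfa.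
rewrite ccomp_S (S2_add_fun h1) (S2_add_fun (hadd0 _)).
under eq_S2 => d1 t do rewrite (S2_add_fun h1) (S2_add_fun (hadd0 _)).
under eq_S2 => d1 t do under eq_S2 => d2 d3 do rewrite (add_Mz h1) (add_Mz (hadd0 _)).
by rewrite -S3Mz.
Qed.

Definition C_t n (fa fb : coch) : V :=
  S2 w (fun a r39_ => S2 r39_ (fun b r40_ => S2 r40_ (fun c r41_ => S2 r41_ (fun d1 r42_ => S2 r42_ (fun d2 r43_ => S2 r43_ (fun d3 e => bodyC n fa fb a b c (d1 ++ d2 ++ d3) e d1 d2 d3)))))).

Lemma NF_C n (fa fb : coch) (Hfa : cadd fa) :
  Ev (rho fa (compd n g fb) (x :: w)) = C_t n fa fb.
Proof.
rewrite /Ev rho_S /C_t -Pd; apply: eq_S5 => a b c d e.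
rewrite (_ : T _ = tens (cfun fa (Xo a b) (c ++ HEl (Yo a b c) (endo (Yo a b c) d) (n + sumd d)
         (ccomp g fb (Yo a b c) d) :: e ++ x :: a) :: map (@hval Ob M) b)); last by [].
have h1 : forall u v : M, cfun fa (Xo a b) (c ++ HEl (Yo a b c) (endo (Yo a b c) d) (n + sumd d) (u + v) :: e ++ x :: a)
   = cfun fa (Xo a b) (c ++ HEl (Yo a b c) (endo (Yo a b c) d) (n + sumd d) u :: e ++ x :: a)
   + cfun fa (Xo a b) (c ++ HEl (Yo a b c) (endo (Yo a b c) d) (n + sumd d) v :: e ++ x :: a).
  by move=> u v; apply: Hfa.
rewrite ccomp_S (S2_add_fun h1) (S2_add_fun (hadd0 _)).
under eq_S2 => d1 t do rewrite (S2_add_fun h1) (S2_add_fun (hadd0 _)).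
under eq_S2 => d1 t do under eq_S2 => d2 d3 do rewrite (add_Mz h1) (add_Mz (hadd0 _)).
by rewrite -S3Mz.
Qed.

Definition XL1_t (fa fb : coch) : V :=
  S2 w (fun a r44_ => S2 r44_ (fun p r45_ => S2 r45_ (fun q r46_ => S2 r46_ (fun r r47_ => S2 r47_ (fun c r48_ => S2 r48_ (fun d e => T (Hf fb a (p ++ q ++ r) c d e :: p ++ app fa (endo (Xo a (p ++ q ++ r)) (Hf fb a (p ++ q ++ r) c d e :: p)) q :: r) *~ (sig a (p ++ q ++ r) c d e * spow (cdeg fa * sumd (Hf fb a (p ++ q ++ r) c d e :: p))))))))).

Definition XL2_t (fa fb : coch) : V :=
  S2 w (fun a r49_ => S2 r49_ (fun p r50_ => S2 r50_ (fun q r51_ => S2 r51_ (fun r r52_ => S2 r52_ (fun c r53_ => S2 r53_ (fun d e => T (app fa (endo (Xo a (p ++ q ++ r)) (Hf fb a (p ++ q ++ r) c d e :: p ++ q)) (r ++ Hf fb a (p ++ q ++ r) c d e :: p) :: q) *~ (sig a (p ++ q ++ r) c d e * spow (sumd (Hf fb a (p ++ q ++ r) c d e :: p ++ q) * sumd r)))))))).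

Lemma NF_X (fa fb : coch) :
  Ev (ext (Lop fa) (rho fb g (x :: w))) = XL1_t fa fb + XL2_t fa fb.
Proof.
rewrite /Ev sumc_ext rho_S.
under eq_S2 => a r1 do under eq_S2 => b r2 do under eq_S2 => c r3 do under eq_S2 => d e do rewrite Lop_S.
rewrite S5D Pb Pb.
by [].
Qed.

Definition Phi (fa fb : coch) (a b a1 a2 a3 a4 a5 : sh) :=
  T (Hf fa a1 a2 a3 a4 a5 :: a2) *~ (spow (cdeg fb * sumd (x :: a)) * sig a1 a2 a3 a4 a5).
Definition F2 (fb : coch) (a b : sh) := app fb (endo (hsrc x) (x :: a)) b.
Definition H2f (fb : coch) (a b c : sh) := app fb (Xo a b) (c ++ x :: a).

Definition Y4_t (fa fb : coch) : V :=
  S2 w (fun y1 r54_ => S2 r54_ (fun y2 r55_ => S2 r55_ (fun y3 r56_ => S2 r56_ (fun y4 r57_ => S2 r57_ (fun y5 r58_ => S2 r58_ (fun b c => Phi fa fb (y1 ++ y2 ++ y3 ++ y4 ++ y5) b y1 y2 y3 y4 (y5 ++ F2 fb (y1 ++ y2 ++ y3 ++ y4 ++ y5) b :: c))))))).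

Definition Y3_t (fa fb : coch) : V :=
  S2 w (fun y1 r59_ => S2 r59_ (fun y2 r60_ => S2 r60_ (fun y3 r61_ => S2 r61_ (fun y4 r62_ => S2 r62_ (fun b r63_ => S2 r63_ (fun x1 x2 => Phi fa fb (y1 ++ y2 ++ y3 ++ y4) b y1 y2 y3 (y4 ++ F2 fb (y1 ++ y2 ++ y3 ++ y4) b :: x1) x2)))))).

Definition Y2_t (fa fb : coch) : V :=
  S2 w (fun y1 r64_ => S2 r64_ (fun y2 r65_ => S2 r65_ (fun y3 r66_ => S2 r66_ (fun b r67_ => S2 r67_ (fun x1 r68_ => S2 r68_ (fun x2 x3 => Phi fa fb (y1 ++ y2 ++ y3) b y1 y2 (y3 ++ F2 fb (y1 ++ y2 ++ y3) b :: x1) x2 x3)))))).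

Definition Y1_t (fa fb : coch) : V :=
  S2 w (fun y1 r69_ => S2 r69_ (fun y2 r70_ => S2 r70_ (fun b r71_ => S2 r71_ (fun x1 r72_ => S2 r72_ (fun x2 r73_ => S2 r73_ (fun x3 x4 => Phi fa fb (y1 ++ y2) b y1 (y2 ++ F2 fb (y1 ++ y2) b :: x1) x2 x3 x4)))))).

Definition Y0_t (fa fb : coch) : V :=
  S2 w (fun a r74_ => S2 r74_ (fun b r75_ => S2 r75_ (fun x1 r76_ => S2 r76_ (fun x2 r77_ => S2 r77_ (fun x3 r78_ => S2 r78_ (fun x4 x5 => Phi fa fb a b (a ++ F2 fb a b :: x1) x2 x3 x4 x5)))))).

Definition YL2_t (fa fb : coch) : V :=
  S2 w (fun a r79_ => S2 r79_ (fun x1 r80_ => S2 r80_ (fun x2 r81_ => S2 r81_ (fun x3 r82_ => S2 r82_ (fun x4 r83_ => S2 r83_ (fun x5 c => T (app fa (endo (Xo a (x1 ++ x2 ++ x3 ++ x4 ++ x5)) (H2f fb a (x1 ++ x2 ++ x3 ++ x4 ++ x5) c :: x1 ++ x2)) (x3 ++ app g (endo (Xo a (x1 ++ x2 ++ x3 ++ x4 ++ x5)) (H2f fb a (x1 ++ x2 ++ x3 ++ x4 ++ x5) c :: x1 ++ x2 ++ x3)) x4 :: x5 ++ H2f fb a (x1 ++ x2 ++ x3 ++ x4 ++ x5) c :: x1) :: x2) *~ (spow (sumd (x :: a ++ (x1 ++ x2 ++ x3 ++ x4 ++ x5)) * sumd c) * spow (cdeg g * sumd x3 + sumd (H2f fb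 a (x1 ++ x2 ++ x3 ++ x4 ++ x5) c :: x1 ++ x2) * sumd (x3 ++ x4 ++ x5))))))))).

Lemma NF_Y (fa fb : coch) :
  Ev (ext (rho fa g) (Lop fb (x :: w))) =
  Y4_t fa fb + Y3_t fa fb + Y2_t fa fb + Y1_t fa fb + Y0_t fa fb + YL2_t fa fb.
Proof.
rewrite /Ev sumc_ext Lop_S.
under eq_S2 => a r1 do under eq_S2 => b c do rewrite rho_S Dec5.
under [X in _ + X]eq_S2 => a r1 do under eq_S2 => b c do rewrite rho_S.
rewrite !S3D YL2 Yk0 Yk1 Yk2 Yk3 Yk4.
by [].
Qed.

End I.

Ltac bsolve := repeat match goal with |- context [odd (absz ?t)] => case: (odd (absz t)) end.
Lemma catAr (T : Type) (a b c : seq T) : (a ++ b) ++ c = a ++ b ++ c.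
Proof. by rewrite catA. Qed.
Ltac enorm := rewrite ?(catAr, cat_cons) ?(endo_cons, endo_cat, htgt_app, hsrc_app).
Ltac snorm := rewrite -?spowD; apply: spow_par;
  rewrite ?(sumd_cat, sumd_cons, hdeg_app, sumd_nil) ?(oddzD, oddzM, oddzN); bsolve; by [].

Ltac unf := rewrite /bodyA /bodyB /bodyC /Phi /Hf /H2f /F2 /Xo /Yo /Gg /sig /sigd.

Section J.
Variables (Ob : Type) (M : zmodType) (V : zmodType).
Local Notation hel := (hel Ob M).
Local Notation sh := (seq hel).
Local Notation coch := (coch Ob M).
Variable tens : seq M -> V.
Variables (g : coch) (x : hel) (w : sh).

Lemma M_ca fa fb : Aca_t tens g x w fa fb = XL2_t tens g x w fa fb.
Proof.
rewrite /Aca_t /XL2_t; apply: eq_S7 => a p q r c d e.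
unf; rewrite -!mulrzA.
congr (T _ _ *~ _).
  enorm. by [].
snorm.
Qed.

Lemma HEl_app (f : coch) X l Z D :
  Z = endo X l -> D = cdeg f + sumd l -> HEl X Z D (cfun f X l) = app f X l.
Proof. by move=> -> ->. Qed.

Definition kk (fa fb : coch) := spow (cdeg fa * cdeg fb) * spow (cdeg fb * (cdeg fa + cdeg g)).

Lemma M_ce fa fb : Ace_t tens g x w fa fb = B_t tens g x w (cdeg fb + cdeg g) fa fb.
Proof.
rewrite /Ace_t /B_t; apply: eq_S7 => a b c d1 d2 d3 e.
unf; rewrite HEl_app; first last.
- by rewrite !(sumd_cat, sumd_cons, hdeg_app); lia.
- by enorm.
rewrite -!mulrzA; congr (T _ _ *~ _).
  enorm. by [].
snorm.
Qed.

Lemma M_cc fa fb : Acc_t tens g x w fa fb = Y2_t tens g x w fa fb *~ kk fa fb.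
Proof.
rewrite /Acc_t /Y2_t -S7Mz; apply: eq_S7 => a b c1 c2 c3 d e.
unf; rewrite /kk -!mulrzA; congr (T _ _ *~ _).
  enorm. by [].
snorm.
Qed.

Lemma M_ee fa fb : Aee_t tens g x w fa fb = Y4_t tens g x w fa fb *~ kk fa fb.
Proof.
rewrite /Aee_t /Y4_t -S7Mz; apply: eq_S7 => a b c d e1 e2 e3.
unf; rewrite /kk -!mulrzA; congr (T _ _ *~ _).
  enorm. by [].
snorm.
Qed.

Lemma M_ea fa fb : Aea_t tens g x w fa fb = YL2_t tens g x w fa fb *~ kk fa fb.
Proof.
rewrite /Aea_t /YL2_t -S7Mz; apply: eq_S7 => a1 a2 b c d e1 e2.
unf; rewrite /kk -!mulrzA; congr (T _ _ *~ _).
  enorm. by [].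
snorm.
Qed.

Lemma M_aa fa fb : Aaa_t tens g x w fa fb = Y0_t tens g x w fa fb *~ kk fa fb.
Proof.
rewrite /Aaa_t /Y0_t -S7Mz; apply: eq_S7 => a1 a2 a3 b c d e.
unf; rewrite /kk -!mulrzA; congr (T _ _ *~ _).
  enorm. by [].
snorm.
Qed.

Lemma M_C fa fb : C_t tens g x w (cdeg fb + cdeg g) fa fb *~ spow (cdeg fb * cdeg g)
   = Y3_t tens g x w fa fb *~ kk fa fb.
Proof.
rewrite /C_t /Y3_t -!S7Mz; apply: eq_S7 => a b c d1 d2 d3 e.
unf; rewrite HEl_app; first last.
- by rewrite !(sumd_cat, sumd_cons, hdeg_app); lia.
- by enorm.
rewrite /kk -!mulrzA; congr (T _ _ *~ _).
  enorm. by [].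
snorm.
Qed.

Lemma M_tail fa fb : XL1_t tens g x w fa fb = Y1_t tens g x w fb fa *~ spow (cdeg fa * (cdeg fb + cdeg g)).
Proof.
rewrite /XL1_t /Y1_t -S7Mz; apply: eq_S7 => a p q r c d e.
unf; rewrite -!mulrzA; congr (T _ _ *~ _).
  enorm. by [].
snorm.
Qed.

End J.

Section K.
Variables (Ob : Type) (M : zmodType) (V : zmodType).
Local Notation hel := (hel Ob M).
Local Notation sh := (seq hel).
Local Notation coch := (coch Ob M).
Variable tens : seq M -> V.
Hypothesis tens_add : forall (w1 w2 : seq M) (a b : M),
      tens (w1 ++ (a + b) :: w2) = tens (w1 ++ a :: w2) + tens (w1 ++ b :: w2).
Variables (g : coch) (x : hel) (w : sh).
Local Notation Ev := (Ev tens).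
Local Notation W := (x :: w).

Definition P (fa fb : coch) :=
  Ev (rho (compd (cdeg fa + cdeg fb) fa fb) g W)
  - Ev (rho fa (compd (cdeg fb + cdeg g) fb g) W)
  + Ev (rho fa (compd (cdeg fb + cdeg g) g fb) W) *~ spow (cdeg fb * cdeg g).

Definition Q (fa fb : coch) :=
  XL2_t tens g x w fa fb
  + (Y0_t tens g x w fa fb + Y2_t tens g x w fa fb + Y3_t tens g x w fa fb
     + Y4_t tens g x w fa fb + YL2_t tens g x w fa fb) *~ kk g fa fb.

Lemma PQ fa fb : cadd fa -> P fa fb = Q fa fb.
Proof.
move=> Ha.
rewrite /P (NF_A tens_add) (NF_B tens_add) // (NF_C tens_add) //.
rewrite M_ce M_cc M_ca M_ee M_ea M_aa M_C /Q.
rewrite !mulrzDl_tmp.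
move: (kk g fa fb) (Y0_t tens g x w fa fb) (Y2_t tens g x w fa fb) (Y3_t tens g x w fa fb)
  (Y4_t tens g x w fa fb) (YL2_t tens g x w fa fb) (B_t tens g x w (cdeg fb + cdeg g) fa fb)
  (XL2_t tens g x w fa fb) => k y0 y2 y3 y4 yl b xl.
transitivity (\sum_(t <- [:: y2 *~ k; b; xl; y4 *~ k; yl *~ k; y0 *~ k; -b; y3 *~ k]) t).
  by rewrite !big_cons big_nil addr0 !addrA.
transitivity (\sum_(t <- [:: b; -b; xl; y0 *~ k; y2 *~ k; y3 *~ k; y4 *~ k; yl *~ k]) t).
  by apply: perm_big; apply/permP => p /=; lia.
by rewrite !big_cons big_nil addr0 addrA subrr add0r !addrA.
Qed.

End K.

Section L.
Variables (Ob : Type) (M : zmodType) (V : zmodType).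
Local Notation hel := (hel Ob M).
Local Notation sh := (seq hel).
Local Notation coch := (coch Ob M).
Local Notation chain := (chain Ob M).
Variable tens : seq M -> V.
Hypothesis tens_add : forall (w1 w2 : seq M) (a b : M),
      tens (w1 ++ (a + b) :: w2) = tens (w1 ++ a :: w2) + tens (w1 ++ b :: w2).
Local Notation Ev := (Ev tens).

Lemma Ev_cat (c1 c2 : chain) : Ev (c1 ++ c2) = Ev c1 + Ev c2.
Proof. exact: sumc_cat. Qed.

Lemma Ev_scale a (c : chain) : Ev (scalec a c) = Ev c *~ a.
Proof.
rewrite /Ev sumc_scale /sumc; elim: c => [|p c IH]; first by rewrite !big_nil mul0rz.
by rewrite !big_cons IH mulrzDl_tmp mulrC mulrzA.
Qed.

Lemma Ev_gcomm A dA B dB (u : sh) :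
  Ev (gcomm A dA B dB u) = Ev (ext A (B u)) + Ev (ext B (A u)) *~ (- spow (dA * dB)).
Proof. by rewrite /gcomm Ev_cat Ev_scale. Qed.

Variables (g : coch) (x : hel) (w : sh).
Local Notation W := (x :: w).

Lemma Ev_compd_n n m (f h : coch) :
  Ev (rho (compd n f h) g W) = Ev (rho (compd m f h) g W).
Proof. by rewrite /Ev !rho_S. Qed.

Lemma cbr_l (f1 f2 : coch) :
  Ev (rho (cbr f1 f2) g W) = Ev (rho (compd (cdeg f1 + cdeg f2) f1 f2) g W)
     - Ev (rho (compd (cdeg f1 + cdeg f2) f2 f1) g W) *~ spow (cdeg f1 * cdeg f2).
Proof.
rewrite /Ev !rho_S -S5Mz -S5N -S5D; apply: eq_S5 => a b c d e.
set L := (_ ++ _ :: _ ++ _ :: a).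
rewrite (_ : T _ _ = tens ((ccomp f1 f2 (Xo x a b) L - ccomp f2 f1 (Xo x a b) L *~ spow (cdeg f1 * cdeg f2))
                      :: map (@hval Ob M) b)); last by [].
rewrite (@add_B _ _ (fun m => tens (m :: map (@hval Ob M) b)) (hadd0 tens_add _)).
rewrite (@add_Mz _ _ (fun m => tens (m :: map (@hval Ob M) b)) (hadd0 tens_add _)).
by rewrite mulrzBl mulrzAC.
Qed.

Lemma cbr_r (f f2 : coch) : cadd f ->
  Ev (rho f (cbr f2 g) W) = Ev (rho f (compd (cdeg f2 + cdeg g) f2 g) W)
     - Ev (rho f (compd (cdeg f2 + cdeg g) g f2) W) *~ spow (cdeg f2 * cdeg g).
Proof.
move=> Hf.
rewrite /Ev !rho_S -S5Mz -S5N -S5D; apply: eq_S5 => a b c d e.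
have h1 : forall u v : M, cfun f (Xo x a b) (c ++ HEl (Yo x a b c) (endo (Yo x a b c) d) (cdeg f2 + cdeg g + sumd d) (u + v) :: e ++ x :: a)
   = cfun f (Xo x a b) (c ++ HEl (Yo x a b c) (endo (Yo x a b c) d) (cdeg f2 + cdeg g + sumd d) u :: e ++ x :: a)
   + cfun f (Xo x a b) (c ++ HEl (Yo x a b c) (endo (Yo x a b c) d) (cdeg f2 + cdeg g + sumd d) v :: e ++ x :: a).
  by move=> u v; apply: Hf.
rewrite (_ : T _ _ = tens (cfun f (Xo x a b) (c ++ HEl (Yo x a b c) (endo (Yo x a b c) d) (cdeg f2 + cdeg g + sumd d)
             (ccomp f2 g (Yo x a b c) d - ccomp g f2 (Yo x a b c) d *~ spow (cdeg f2 * cdeg g)) :: e ++ x :: a)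
                      :: map (@hval Ob M) b)); last by [].
rewrite (add_B h1) (add_Mz h1).
rewrite (@add_B _ _ (fun m => tens (m :: map (@hval Ob M) b)) (hadd0 tens_add _)).
rewrite (@add_Mz _ _ (fun m => tens (m :: map (@hval Ob M) b)) (hadd0 tens_add _)).
by rewrite mulrzBl mulrzAC.
Qed.

End L.

Ltac tl t := lazymatch t with
 | ?a + ?b => let la := tl a in let lb := tl b in constr:(la ++ lb)
 | _ => constr:([:: t]) end.
Ltac zperm := lazymatch goal with |- ?L = ?R =>
  let lL := tl L in let lR := tl R in
  transitivity (\sum_(t <- lL) t); [by rewrite ?big_cat ?big_seq1 | ];
  transitivity (\sum_(t <- lR) t); [ | by rewrite ?big_cat ?big_seq1];
  apply: perm_big; apply/permP => p /=; ring end.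

Unset Implicit Arguments. Set Strict Implicit.

Theorem proposition6p2 (Ob : Type) (M : zmodType)
  (hom : Ob -> Ob -> int -> pred M)
  (f1 f2 g : coch Ob M)
  (Hf1 : coch_ok hom f1) (Hf2 : coch_ok hom f2) (Hg : coch_ok hom g)
  (V : zmodType) (tens : seq M -> V)
  (tens_add : forall (w1 w2 : seq M) (a b : M),
      tens (w1 ++ (a + b) :: w2) = tens (w1 ++ a :: w2) + tens (w1 ++ b :: w2))
  (w : seq (hel Ob M)) (Hw : cyc_word hom w) :
  evalc tens (lhs62 f1 f2 g w) = evalc tens (rhs62 f1 f2 g w).
Proof.
case: Hw => x [w' [-> _]].
have Ha1 : cadd f1 by case: Hf1.
have Ha2 : cadd f2 by case: Hf2.
change (Ev tens (lhs62 f1 f2 g (x :: w')) = Ev tens (rhs62 f1 f2 g (x :: w'))).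
rewrite /lhs62 /rhs62.
rewrite (Ev_cat tens (rho (cbr f1 f2) g (x :: w'))) (Ev_cat tens (scalec (-1) _)) !Ev_scale.
rewrite (Ev_cat tens (gcomm (Lop f1) _ _ _ _)) !Ev_scale !Ev_gcomm.
rewrite (cbr_l tens_add) (cbr_r tens_add) // (cbr_r tens_add) //.
rewrite (Ev_compd_n tens g x w' (cdeg f1 + cdeg f2) (cdeg f2 + cdeg f1) f2 f1).
rewrite !NF_X !NF_Y !M_tail.
transitivity (P tens g x w' f1 f2 - P tens g x w' f2 f1 *~ spow (cdeg f1 * cdeg f2)).
  rewrite /P.
  move: (Ev tens (rho (compd (cdeg f1 + cdeg f2) f1 f2) g (x :: w')))
        (Ev tens (rho (compd (cdeg f2 + cdeg f1) f2 f1) g (x :: w')))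
        (Ev tens (rho f1 (compd (cdeg f2 + cdeg g) f2 g) (x :: w')))
        (Ev tens (rho f1 (compd (cdeg f2 + cdeg g) g f2) (x :: w')))
        (Ev tens (rho f2 (compd (cdeg f1 + cdeg g) f1 g) (x :: w')))
        (Ev tens (rho f2 (compd (cdeg f1 + cdeg g) g f1) (x :: w'))) => a12 a21 b12 c12 b21 c21.
  rewrite ?(mulrC (cdeg f2) (cdeg f1)).
  move: (spow (cdeg f1 * cdeg f2)) (spow (cdeg f2 * cdeg g)) (spow (cdeg f1 * cdeg g)) => s t2 t1.
  rewrite !(mulrzBl, mulrzDl_tmp, opprD, opprK, mulNrz, mulrNz, mulr1z, mulr1n).
  zperm.
rewrite !PQ //.
rewrite /Q /kk.
have E1 : spow (cdeg f2 * cdeg f1) * spow (cdeg f1 * (cdeg f2 + cdeg g)) * spow (cdeg f1 * cdeg f2)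
   = spow (cdeg f1 * (cdeg f2 + cdeg g)).
  by rewrite -!spowD; apply: spow_par; rewrite ?(oddzD, oddzM, oddzN); bsolve.
rewrite (mulrC (spow (cdeg f1 * cdeg f2))).
rewrite (mulrzDl_tmp _ (XL2_t tens g x w' f2 f1)) -(mulrzA _ _ (spow (cdeg f1 * cdeg f2))) E1.
move: (XL2_t tens g x w' f1 f2) (XL2_t tens g x w' f2 f1)
  (Y0_t tens g x w' f1 f2) (Y1_t tens g x w' f1 f2) (Y2_t tens g x w' f1 f2) (Y3_t tens g x w' f1 f2)
  (Y4_t tens g x w' f1 f2) (YL2_t tens g x w' f1 f2)
  (Y0_t tens g x w' f2 f1) (Y1_t tens g x w' f2 f1) (Y2_t tens g x w' f2 f1) (Y3_t tens g x w' f2 f1)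
  (Y4_t tens g x w' f2 f1) (YL2_t tens g x w' f2 f1) => X12 X21 A0 A1 A2 A3 A4 AL B0 B1 B2 B3 B4 BL.
move: (spow (cdeg f1 * cdeg f2)) (spow (cdeg f1 * (cdeg f2 + cdeg g))) (spow (cdeg f2 * (cdeg f1 + cdeg g))) => s s1 s2.
rewrite !(mulrzBl, mulrzDl_tmp, opprD, opprK, mulNrz, mulrNz, mulr1z, mulr1n) !mulrzA.
rewrite -[LHS]addr0 -(subrr (B1 *~ s1)) -[LHS]addr0 -(subrr (A1 *~ s2 *~ s)).
zperm.
Qed.
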